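(* Let $F$ be an algebraically closed field with $\operatorname{char}F=2$, $R=F[[x,y]]$, and let $f\in R^2$ be such that $j_3(f)$ is contact equivalent to one of $(x^3,\,y^3+x^2y)$, $(x^3,\,y^3)$, $(x^3+x^2y,\,y^3+\lambda x^2y)$ with $\lambda\neq 1$, $(x^2y,\,x^3+y^3)$. Then $j_3(f)$ is $3$-determined. In particular $f$ is contact equivalent to the corresponding one of these forms.
   Context: $\mathfrak m=\langle x,y\rangle$, $j_3(f)$ is the image of $f$ in $R^2/\mathfrak m^4R^2$. Contact equivalence: $g=U\cdot\phi(f)$ with $U\in GL(2,R)$, $\phi\in\operatorname{Aut}(R)$. An element $h$ is $k$-determined if every $g\in R^2$ with $j_k(g)=j_k(h)$ is contact equivalent to $h$. *)

(* Defs.v *)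
From mathcomp Require Import all_boot all_order all_algebra.
Set Implicit Arguments. Unset Strict Implicit. Unset Printing Implicit Defensive.
Import GRing.Theory.
Local Open Scope ring_scope.

Section PS.
Variable F : fieldType.

(* f i j = coefficient of x^i y^j *)
Definition ps := nat -> nat -> F.
Definition ps2 := (ps * ps)%type.

Definition psC (c : F) : ps := fun i j => if (i == 0%N) && (j == 0%N) then c else 0.
Definition psmono (a b : nat) : ps := fun i j => if (i == a) && (j == b) then 1 else 0.
Definition psadd (f g : ps) : ps := fun i j => f i j + g i j.
Definition psscale (c : F) (f : ps) : ps := fun i j => c * f i j.
Definition psmul (f g : ps) : ps :=
  fun i j => \sum_(a < i.+1) \sum_(b < j.+1) f a b * g (i - a)%N (j - b)%N.
Definition pspow (f : ps) (n : nat) : ps := iter n (psmul f) (psC 1).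

(* f(u,v), for u, v in the maximal ideal (u^a v^b has order >= a+b) *)
Definition pssubst (f u v : ps) : ps :=
  fun i j => \sum_(a < (i + j).+1) \sum_(b < (i + j).+1)
               f a b * psmul (pspow u a) (pspow v b) i j.

(* phi in Aut(R): x |-> u, y |-> v with u,v in m and invertible Jacobian at 0 *)
Definition coord_change (u v : ps) : Prop :=
  u 0%N 0%N = 0 /\ v 0%N 0%N = 0 /\ u 1%N 0%N * v 0%N 1%N - u 0%N 1%N * v 1%N 0%N != 0.

Definition subst2 (f : ps2) (u v : ps) : ps2 := (pssubst f.1 u v, pssubst f.2 u v).

Record mat2 := Mat2 { m11 : ps; m12 : ps; m21 : ps; m22 : ps }.

Definition matmul (A B : mat2) : mat2 :=
  Mat2 (psadd (psmul (m11 A) (m11 B)) (psmul (m12 A) (m21 B)))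
       (psadd (psmul (m11 A) (m12 B)) (psmul (m12 A) (m22 B)))
       (psadd (psmul (m21 A) (m11 B)) (psmul (m22 A) (m21 B)))
       (psadd (psmul (m21 A) (m12 B)) (psmul (m22 A) (m22 B))).

Definition mat1 : mat2 := Mat2 (psC 1) (psC 0) (psC 0) (psC 1).

Definition GL2 (U : mat2) : Prop := exists V, matmul U V = mat1 /\ matmul V U = mat1.

Definition matapp (U : mat2) (f : ps2) : ps2 :=
  (psadd (psmul (m11 U) f.1) (psmul (m12 U) f.2),
   psadd (psmul (m21 U) f.1) (psmul (m22 U) f.2)).

Definition contact_equiv (f g : ps2) : Prop :=
  exists U u v, GL2 U /\ coord_change u v /\ g = matapp U (subst2 f u v).

(* equality of images in R^2 / m^(k+1) R^2 *)
Definition jet_eq (k : nat) (g h : ps2) : Prop :=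
  forall i j, (i + j <= k)%N -> g.1 i j = h.1 i j /\ g.2 i j = h.2 i j.

(* j_k(f) as the polynomial truncation (representative in R^2) *)
Definition jet (k : nat) (f : ps2) : ps2 :=
  (fun i j => if (i + j <= k)%N then f.1 i j else 0,
   fun i j => if (i + j <= k)%N then f.2 i j else 0).

Definition determined (k : nat) (h : ps2) : Prop :=
  forall g, jet_eq k g h -> contact_equiv h g.

Definition NF1 : ps2 := (psmono 3 0, psadd (psmono 0 3) (psmono 2 1)).
Definition NF2 : ps2 := (psmono 3 0, psmono 0 3).
Definition NF3 (lam : F) : ps2 :=
  (psadd (psmono 3 0) (psmono 2 1), psadd (psmono 0 3) (psscale lam (psmono 2 1))).
Definition NF4 : ps2 := (psmono 2 1, psadd (psmono 3 0) (psmono 0 3)).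

End PS.

(* Main.v *)
Require Import Defs.
From mathcomp Require Import all_boot all_order all_algebra.
From Stdlib Require Import FunctionalExtensionality.
From mathcomp Require Import ring zify.
Set Implicit Arguments. Unset Strict Implicit. Unset Printing Implicit Defensive.
Import GRing.Theory.
Local Open Scope ring_scope.

Section Basics.
Variable F : fieldType.
Local Notation A := {poly {poly F}}.
Local Notation ps := (ps F).

Definition cc (c : F) : A := c%:P%:P.
Definition xx : A := ('X : {poly F})%:P.
Definition yy : A := 'X.

Definition ordge (k : nat) (P : A) := forall i j, (i + j < k)%N -> P`_j`_i = 0.

Lemma coefMM (P Q : A) i j : (P * Q)`_j`_i =
  \sum_(b < j.+1) \sum_(a < i.+1) P`_b`_a * Q`_(j - b)`_(i - a).
Proof. by rewrite coefM coef_sum; apply: eq_bigr => b _; rewrite coefM. Qed.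

Lemma coef_cc c i j : (cc c)`_j`_i = if (i == 0%N) && (j == 0%N) then c else 0.
Proof. rewrite /cc coefC; case: (j == 0%N); rewrite ?coefC ?coef0 //; by case: (i == 0%N). Qed.

Lemma coef_ccM c P i j : (cc c * P)`_j`_i = c * P`_j`_i.
Proof. by rewrite /cc coefCM coefCM. Qed.

Lemma coef_xx i j : xx`_j`_i = if (i == 1%N) && (j == 0%N) then 1 else 0.
Proof. rewrite /xx coefC; case: (j == 0%N); rewrite ?coefX ?coef0 ?andbT ?andbF //. by case: (i == 1%N). Qed.

Lemma coef_yy i j : yy`_j`_i = if (i == 0%N) && (j == 1%N) then 1 else 0.
Proof. rewrite /yy coefX; case: (j == 1%N) => /=; rewrite ?coef1 ?coef0 ?andbT ?andbF //; by case: (i == 0%N). Qed.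

Lemma ordge_le k l P : (k <= l)%N -> ordge l P -> ordge k P.
Proof. move=> hkl h i j hij; apply: h; exact: leq_trans hij hkl. Qed.

Lemma ordge0 k : ordge k 0.
Proof. by move=> i j _; rewrite !coef0. Qed.

Lemma ordgeD k P Q : ordge k P -> ordge k Q -> ordge k (P + Q).
Proof. by move=> hP hQ i j h; rewrite !coefD hP // hQ // addr0. Qed.

Lemma ordgeN k P : ordge k P -> ordge k (- P).
Proof. by move=> hP i j h; rewrite !coefN hP // oppr0. Qed.

Lemma ordgeB k P Q : ordge k P -> ordge k Q -> ordge k (P - Q).
Proof. by move=> hP hQ; apply: ordgeD => //; apply: ordgeN. Qed.

Lemma ordgeM k l P Q : ordge k P -> ordge l Q -> ordge (k + l) (P * Q).
Proof.
move=> hP hQ i j h; rewrite coefMM; apply: big1 => b _; apply: big1 => a _.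
have hb := ltn_ord b; have ha := ltn_ord a.
case: (ltnP (a + b) k) => hab; first by rewrite hP // mul0r.
rewrite hQ ?mulr0 //; lia.
Qed.

Lemma ordgeMl k P Q : ordge k Q -> ordge k (P * Q).
Proof. move=> h; have := @ordgeM 0 k P Q; rewrite add0n; apply=> //. Qed.

Lemma ordgeMr k P Q : ordge k P -> ordge k (P * Q).
Proof. move=> h; have := @ordgeM k 0 P Q; rewrite addn0; apply=> //. Qed.

Lemma ordgeX k P n : ordge k P -> ordge (k * n) (P ^+ n).
Proof.
move=> h; elim: n => [|n IH]; first by move=> i j; rewrite muln0.
by rewrite exprS mulnS; apply: ordgeM.
Qed.

Lemma ordge_sum k (I : Type) (r : seq I) (Pr : pred I) (G : I -> A) :
  (forall i, Pr i -> ordge k (G i)) -> ordge k (\sum_(i <- r | Pr i) G i).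
Proof.
move=> h; elim/big_ind: _ => //; [exact: ordge0 | by move=> *; apply: ordgeD].
Qed.

Lemma ordge_xx : ordge 1 xx.
Proof. move=> i j h; rewrite coef_xx; case: i h => [|i] //= h. Qed.

Lemma ordge_yy : ordge 1 yy.
Proof. move=> i j h; rewrite coef_yy; case: j h => [|j] //=; rewrite ?andbF //; lia. Qed.

Lemma ordge_cc0 k : ordge k (cc 0).
Proof. by rewrite /cc !polyC0; apply: ordge0. Qed.

Definition apx (N : nat) (f : ps) (P : A) := forall i j, (i + j <= N)%N -> f i j = P`_j`_i.

Definition trp (N : nat) (f : ps) : A := \poly_(j < N.+1) \poly_(i < N.+1) f i j.

Lemma apx_trp N f : apx N f (trp N f).
Proof.
move=> i j h; rewrite /trp coef_poly.
have -> : (j < N.+1)%N by lia.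
by rewrite coef_poly; have -> : (i < N.+1)%N by lia.
Qed.

Lemma apx_le N M f P : (M <= N)%N -> apx N f P -> apx M f P.
Proof. move=> hMN h i j hij; apply: h; exact: leq_trans hij hMN. Qed.

Lemma apx_congr N f P Q : apx N f P -> ordge N.+1 (Q - P) -> apx N f Q.
Proof.
move=> h hQ i j hij; rewrite h //.
by move/eqP: (hQ i j hij); rewrite !coefB subr_eq0 => /eqP ->.
Qed.

Lemma ps_ext (f g : ps) : (forall N, exists P, apx N f P /\ apx N g P) -> f = g.
Proof.
move=> h; apply: functional_extensionality_dep => i.
apply: functional_extensionality_dep => j.
have [P [h1 h2]] := h (i + j)%N; by rewrite h1 // h2.
Qed.

Lemma apx_add N f g P Q : apx N f P -> apx N g Q -> apx N (psadd f g) (P + Q).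
Proof. by move=> hf hg i j h; rewrite /psadd !coefD hf // hg. Qed.

Lemma apx_C N c : apx N (psC c) (cc c).
Proof. by move=> i j h; rewrite /psC coef_cc. Qed.

Lemma apx_scale N c f P : apx N f P -> apx N (psscale c f) (cc c * P).
Proof. by move=> hf i j h; rewrite /psscale coef_ccM hf. Qed.

Lemma apx_mul N f g P Q : apx N f P -> apx N g Q -> apx N (psmul f g) (P * Q).
Proof.
move=> hf hg i j h; rewrite /psmul coefMM exchange_big /=.
apply: eq_bigr => a _; apply: eq_bigr => b _.
have ha := ltn_ord a; have hb := ltn_ord b.
rewrite hf; last by lia.
by rewrite hg //; lia.
Qed.

Lemma apx_mono N a b : apx N (psmono F a b) (xx ^+ a * yy ^+ b).
Proof.
move=> i j h; rewrite /psmono /xx /yy -rmorphXn /= coefCM coefXn.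
case: (j == b); last by rewrite mulr0 coef0 andbF.
by rewrite mulr1 coefXn andbT; case: (i == a).
Qed.

Lemma cc1 : cc 1 = 1.
Proof. by rewrite /cc !polyC1. Qed.

Lemma pspowS (f : ps) n : pspow f n.+1 = psmul f (pspow f n).
Proof. by rewrite /pspow iterS. Qed.

Lemma apx_pow N f P n : apx N f P -> apx N (pspow f n) (P ^+ n).
Proof.
move=> hf; elim: n => [|n IH]; first by rewrite expr0 -cc1; apply: apx_C.
by rewrite pspowS exprS; apply: apx_mul.
Qed.

End Basics.

Section Ev.
Variable F : fieldType.
Local Notation A := {poly {poly F}}.
Local Notation ps := (ps F).
Local Notation cc := (@cc F).
Local Notation xx := (@xx F).
Local Notation yy := (@yy F).
Local Notation ordge := (@ordge F).
Local Notation apx := (@apx F).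
Local Notation trp := (@trp F).

Lemma cm_in (U : A) : commr_rmorph (polyC \o polyC : {rmorphism F -> A}) U.
Proof. move=> a; exact: mulrC. Qed.
Lemma cm_out (U V : A) : commr_rmorph (horner_morph (cm_in U)) V.
Proof. move=> a; exact: mulrC. Qed.
Definition evm (U V : A) := horner_morph (cm_out U V).
Definition ev (P U V : A) : A := evm U V P.

Lemma ev_add P Q U V : ev (P + Q) U V = ev P U V + ev Q U V.
Proof. exact: rmorphD. Qed.
Lemma ev_sub P Q U V : ev (P - Q) U V = ev P U V - ev Q U V.
Proof. exact: rmorphB. Qed.
Lemma ev_opp P U V : ev (- P) U V = - ev P U V.
Proof. exact: rmorphN. Qed.
Lemma ev_mul P Q U V : ev (P * Q) U V = ev P U V * ev Q U V.
Proof. exact: rmorphM. Qed.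
Lemma ev_exp P n U V : ev (P ^+ n) U V = ev P U V ^+ n.
Proof. exact: rmorphXn. Qed.
Lemma ev_cc c U V : ev (cc c) U V = cc c.
Proof. by rewrite /ev /evm /cc horner_morphC /= horner_morphC. Qed.
Lemma ev_1 U V : ev 1 U V = 1.
Proof. exact: rmorph1. Qed.
Lemma ev_0 U V : ev 0 U V = 0.
Proof. exact: rmorph0. Qed.
Lemma ev_xx U V : ev xx U V = U.
Proof. by rewrite /ev /evm /xx horner_morphC /= horner_morphX. Qed.
Lemma ev_yy U V : ev yy U V = V.
Proof. by rewrite /ev /evm /yy horner_morphX. Qed.

Lemma rmorph_ext (f g : {rmorphism A -> A}) :
  (forall c, f (cc c) = g (cc c)) -> f xx = g xx -> f yy = g yy -> f =1 g.
Proof.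
move=> hc hx hy P.
rewrite (poly_initial f) (poly_initial g) /= /horner_morph.
have -> : f 'X = g 'X by exact: hy.
congr (_.[_]); apply: eq_map_poly => q /=.
have hf := poly_initial (f \o polyC) q.
have hg := poly_initial (g \o polyC) q.
rewrite /= in hf hg; rewrite hf hg /horner_morph.
have -> : f ('X%:P) = g ('X%:P) by exact: hx.
congr (_.[_]); apply: eq_map_poly => c /=; exact: hc.
Qed.

Lemma ev_comp P U V U' V' :
  ev (ev P U V) U' V' = ev P (ev U U' V') (ev V U' V').
Proof.
have := @rmorph_ext (evm U' V' \o evm U V) (evm (ev U U' V') (ev V U' V')).
apply.
- move=> c; change (ev (ev (cc c) U V) U' V' = ev (cc c) (ev U U' V') (ev V U' V')).
  by rewrite !ev_cc.
- change (ev (ev xx U V) U' V' = ev xx (ev U U' V') (ev V U' V')).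
  by rewrite !ev_xx.
- change (ev (ev yy U V) U' V' = ev yy (ev U U' V') (ev V U' V')).
  by rewrite !ev_yy.
Qed.

Lemma ev_id P : ev P xx yy = P.
Proof.
have := @rmorph_ext (evm xx yy) idfun; apply.
- by move=> c; change (ev (cc c) xx yy = cc c); rewrite ev_cc.
- by change (ev xx xx yy = xx); rewrite ev_xx.
- by change (ev yy xx yy = yy); rewrite ev_yy.
Qed.

Definition szb (P : A) (b : nat) : nat := size P`_b.
Definition bnd (P : A) : nat := addn (size P) (\sum_(b < size P) szb P b)%N.

Lemma bnd_size (P : A) : (size P <= bnd P)%N.
Proof. exact: leq_addr. Qed.

Lemma bnd_sizeb (P : A) b : (szb P b <= bnd P)%N.
Proof.
rewrite /szb.
case: (ltnP b (size P)) => hb.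
  apply: leq_trans (leq_addl _ _).
  by rewrite (bigD1 (Ordinal hb)) //= /szb leq_addr.
by rewrite nth_default // size_poly0.
Qed.

Lemma ev_expand n P U V : (bnd P <= n)%N ->
  ev P U V = \sum_(b < n) \sum_(a < n) cc (P`_b`_a) * (U ^+ a * V ^+ b).
Proof.
move=> hn; rewrite /ev /evm /horner_morph.
rewrite (horner_coef_wide _ (n := n)); last first.
  apply: leq_trans (size_poly _ _) _; exact: leq_trans (bnd_size P) hn.
apply: eq_bigr => b _.
rewrite coef_map_id0; last by rewrite map_poly0 horner0.
rewrite (horner_coef_wide _ (n := n)); last first.
  apply: leq_trans (size_poly _ _) _; exact: leq_trans (bnd_sizeb P b) hn.
rewrite mulr_suml; apply: eq_bigr => a _; rewrite coef_map_id0 /=; last by rewrite !polyC0.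
by rewrite mulrA.
Qed.

Lemma ev_coef n P U V i j : (bnd P <= n)%N ->
  (ev P U V)`_j`_i = \sum_(b < n) \sum_(a < n) P`_b`_a * (U ^+ a * V ^+ b)`_j`_i.
Proof.
move=> hn; rewrite (ev_expand _ _ hn) coef_sum coef_sum.
apply: eq_bigr => b _; rewrite coef_sum coef_sum; apply: eq_bigr => a _.
by rewrite coef_ccM.
Qed.

Lemma sum_trunc (G : nat -> F) m n : (m <= n)%N ->
  (forall a, (m <= a)%N -> (a < n)%N -> G a = 0) ->
  \sum_(a < n) G a = \sum_(a < m) G a.
Proof.
move=> hmn h; rewrite -!(big_mkord xpredT) (big_cat_nat (leq0n m) hmn) /=.
rewrite [X in _ + X](_ : _ = 0) ?addr0 //.
rewrite big_nat_cond; apply: big1 => a /andP [/andP [h1 h2] _]; exact: h.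
Qed.

Lemma ordge_monoUV U V a b : ordge 1 U -> ordge 1 V -> ordge (a + b) (U ^+ a * V ^+ b).
Proof.
move=> hU hV; apply: ordgeM; [have := ordgeX (n:=a) hU | have := ordgeX (n:=b) hV]; by rewrite mul1n.
Qed.

Lemma ev_ordge k P U V : ordge k P -> ordge 1 U -> ordge 1 V -> ordge k (ev P U V).
Proof.
move=> hP hU hV i j hij; rewrite (ev_coef _ _ _ _ (leqnn _)).
apply: big1 => b _; apply: big1 => a _.
case: (ltnP (a + b) k) => hab; first by rewrite hP // mul0r.
by rewrite (ordge_monoUV (a:=a) (b:=b) hU hV) ?mulr0 //; lia.
Qed.

Lemma apx_subst N f u v P U V : apx N f P -> apx N u U -> apx N v V ->
  u 0%N 0%N = 0 -> v 0%N 0%N = 0 -> apx N (pssubst f u v) (ev P U V).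
Proof.
move=> hf hu hv hu0 hv0.
have oU : ordge 1 U.
  move=> i j h; have hi : i = 0%N by lia.
  have hj : j = 0%N by lia.
  by subst; rewrite -hu.
have oV : ordge 1 V.
  move=> i j h; have hi : i = 0%N by lia.
  have hj : j = 0%N by lia.
  by subst; rewrite -hv.
move=> i j hij.
pose G a b := P`_b`_a * (U ^+ a * V ^+ b)`_j`_i.
have hz : forall a b, (i + j < a + b)%N -> G a b = 0.
  move=> a b h; rewrite /G (ordge_monoUV (a:=a) (b:=b) oU oV) ?mulr0 //.
rewrite /pssubst (ev_coef (n := maxn (i + j).+1 (bnd P)) _ _ _ _ (leq_maxr _ _)).
transitivity (\sum_(a < (i + j).+1) \sum_(b < (i + j).+1) G a b).
  apply: eq_bigr => a _; apply: eq_bigr => b _.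
  rewrite (apx_mul (apx_pow a hu) (apx_pow b hv)) //.
  case: (leqP (a + b) (i + j)) => hab.
    by rewrite hf //; lia.
  by have := hz a b hab; rewrite /G => ->; rewrite (ordge_monoUV (a:=a) (b:=b) oU oV) ?mulr0.
set M := maxn (i + j).+1 (bnd P).
rewrite (_ : \sum_(b < M) \sum_(a < M) _ = \sum_(b < M) \sum_(a < M) G a b) //.
rewrite [RHS]exchange_big /=.
have e1 := @sum_trunc (fun a => \sum_(b < M) G a b) (i + j).+1 M (leq_maxl _ _).
rewrite /= in e1; rewrite e1; last first.
  move=> a ha _; apply: big1 => b _; apply: hz; lia.
apply: eq_bigr => a _.
have e2 := @sum_trunc (fun b => G a b) (i + j).+1 M (leq_maxl _ _).
rewrite /= in e2; rewrite e2 //.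
move=> b hb _; apply: hz; have := ltn_ord a; lia.
Qed.

End Ev.

Section Alg.
Variable F : fieldType.
Local Notation A := {poly {poly F}}.
Local Notation ps := (ps F).
Local Notation ps2 := (ps2 F).
Local Notation cc := (@cc F).
Local Notation xx := (@xx F).
Local Notation yy := (@yy F).
Local Notation ordge := (@ordge F).
Local Notation apx := (@apx F).
Local Notation trp := (@trp F).
Local Notation ev := (@ev F).
Local Notation mat2 := (mat2 F).

Lemma cc0 : cc 0 = 0.
Proof. by rewrite /cc !polyC0. Qed.

Lemma lin_decomp_ord (P : A) :
  ordge 2 (P - (cc P`_0`_0 + cc P`_0`_1 * xx + cc P`_1`_0 * yy)).
Proof.
move=> i j h; rewrite !coefB !coefD !coef_ccM !coef_cc !coef_xx !coef_yy.
case: i h => [|[|i]]; case: j => [|[|j]] //= h; rewrite ?mulr0 ?mulr1 ?addr0 ?add0r ?subrr //; lia.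
Qed.

Lemma ev_lin P U V : ordge 1 U -> ordge 1 V ->
  ordge 2 (ev P U V - (cc P`_0`_0 + cc P`_0`_1 * U + cc P`_1`_0 * V)).
Proof.
move=> hU hV.
pose L : A := cc P`_0`_0 + cc P`_0`_1 * xx + cc P`_1`_0 * yy.
have hR : ordge 2 (P - L) := lin_decomp_ord P.
have eL : ev L U V = cc P`_0`_0 + cc P`_0`_1 * U + cc P`_1`_0 * V.
  by rewrite /L !ev_add !ev_mul !ev_cc ev_xx ev_yy.
have e : ev P U V = ev (P - L) U V + ev L U V by rewrite -ev_add subrK.
rewrite e eL addrK; exact: ev_ordge.
Qed.

Lemma powdiff X X' K a : ordge 1 X -> ordge K (X' - X) -> (1 <= K)%N ->
  ordge (K + a - 1) (X' ^+ a - X ^+ a).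
Proof.
move=> hX hd hK; elim: a => [|a IH]; first by rewrite !expr0 subrr; apply: ordge0.
have hX' : ordge 1 X'.
  rewrite -(subrK X X'); apply: ordgeD => //; exact: ordge_le hK hd.
rewrite (_ : X' ^+ a.+1 - X ^+ a.+1 = X' * (X' ^+ a - X ^+ a) + (X' - X) * X ^+ a);
  last by rewrite !exprS; ring.
apply: ordgeD.
  apply: ordge_le (ordgeM hX' IH); lia.
apply: ordge_le (ordgeM hd (ordgeX (n:=a) hX)); lia.
Qed.

Lemma monodiff X X' Y Y' K a b : ordge 1 X -> ordge 1 Y ->
  ordge K (X' - X) -> ordge K (Y' - Y) -> (1 <= K)%N ->
  ordge (K + a + b - 1) (X' ^+ a * Y' ^+ b - X ^+ a * Y ^+ b).
Proof.
move=> hX hY hdX hdY hK.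
have hY' : ordge 1 Y'.
  rewrite -(subrK Y Y'); apply: ordgeD => //; exact: ordge_le hK hdY.
rewrite (_ : _ - _ = (X' ^+ a - X ^+ a) * Y' ^+ b + X ^+ a * (Y' ^+ b - Y ^+ b)); last by ring.
apply: ordgeD.
  case: a => [|a]; first by rewrite !expr0 subrr mul0r; apply: ordge0.
  apply: ordge_le (ordgeM (powdiff (a:=a.+1) hX hdX hK) (ordgeX (n:=b) hY')); lia.
case: b => [|b]; first by rewrite !expr0 subrr mulr0; apply: ordge0.
apply: ordge_le (ordgeM (ordgeX (n:=a) hX) (powdiff (a:=b.+1) hY hdY hK)); lia.
Qed.

Lemma ev_diff2 R U V U' V' K : ordge 2 R -> ordge 1 U -> ordge 1 V ->
  ordge K (U' - U) -> ordge K (V' - V) -> (1 <= K)%N ->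
  ordge K.+1 (ev R U' V' - ev R U V).
Proof.
move=> hR hU hV hdU hdV hK.
rewrite !(ev_expand (n := bnd R)) // -sumrB; apply: ordge_sum => b _.
rewrite -sumrB; apply: ordge_sum => a _.
rewrite -mulrBr.
case: (ltnP (a + b) 2) => hab.
  by rewrite hR // cc0 mul0r; apply: ordge0.
apply: ordgeMl; apply: ordge_le (monodiff (a:=a) (b:=b) hU hV hdU hdV hK); lia.
Qed.

Lemma ev_taylor P U V U' V' K : ordge 1 U -> ordge 1 V ->
  ordge K (U' - U) -> ordge K (V' - V) -> (1 <= K)%N ->
  ordge K.+1 (ev P U' V' - ev P U V - (cc P`_0`_1 * (U' - U) + cc P`_1`_0 * (V' - V))).
Proof.
move=> hU hV hdU hdV hK.
pose L : A := cc P`_0`_0 + cc P`_0`_1 * xx + cc P`_1`_0 * yy.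
have hR : ordge 2 (P - L) := lin_decomp_ord P.
have eL : forall W Z, ev L W Z = cc P`_0`_0 + cc P`_0`_1 * W + cc P`_1`_0 * Z.
  by move=> W Z; rewrite /L !ev_add !ev_mul !ev_cc ev_xx ev_yy.
have e : forall W Z, ev P W Z = ev (P - L) W Z + ev L W Z.
  by move=> W Z; rewrite -ev_add subrK.
rewrite !e !eL.
rewrite (_ : _ - _ - _ = ev (P - L) U' V' - ev (P - L) U V); last by ring.
exact: ev_diff2.
Qed.

Lemma apx_ord1 N u U : apx N u U -> u 0%N 0%N = 0 -> ordge 1 U.
Proof.
move=> hu hu0 i j h; have hi : i = 0%N by lia.
have hj : j = 0%N by lia.
by subst; rewrite -hu.
Qed.

Lemma subst_lin (f u v : ps) : u 0%N 0%N = 0 -> v 0%N 0%N = 0 ->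
  [/\ pssubst f u v 0%N 0%N = f 0%N 0%N,
      pssubst f u v 1%N 0%N = f 1%N 0%N * u 1%N 0%N + f 0%N 1%N * v 1%N 0%N &
      pssubst f u v 0%N 1%N = f 1%N 0%N * u 0%N 1%N + f 0%N 1%N * v 0%N 1%N].
Proof.
move=> hu0 hv0.
have tf := @apx_trp F 1 f; have tu := @apx_trp F 1 u; have tv := @apx_trp F 1 v.
have hs := apx_subst tf tu tv hu0 hv0.
have oU := apx_ord1 tu hu0.
have oV := apx_ord1 tv hv0.
have hl := ev_lin (trp 1 f) oU oV.
have c : forall i j, (i + j <= 1)%N -> pssubst f u v i j =
    (cc (trp 1 f)`_0`_0 + cc (trp 1 f)`_0`_1 * trp 1 u + cc (trp 1 f)`_1`_0 * trp 1 v)`_j`_i.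
  move=> i j h; rewrite hs //; apply/eqP; rewrite -subr_eq0 -!coefB; apply/eqP; apply: hl; lia.
split.
- rewrite c // !coefD !coef_ccM coef_cc /= -tu // -tv // hu0 hv0 -tf //; ring.
- rewrite c // !coefD !coef_ccM coef_cc /= -tu // -tv // -!tf //; ring.
- rewrite c // !coefD !coef_ccM coef_cc /= -tu // -tv // -!tf //; ring.
Qed.

End Alg.

Section Mat.
Variable F : fieldType.
Local Notation A := {poly {poly F}}.
Local Notation ps := (ps F).
Local Notation ps2 := (ps2 F).
Local Notation cc := (@cc F).
Local Notation xx := (@xx F).
Local Notation yy := (@yy F).
Local Notation ordge := (@ordge F).
Local Notation apx := (@apx F).
Local Notation trp := (@trp F).
Local Notation ev := (@ev F).
Local Notation mat2 := (mat2 F).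

Lemma ps_eq (f g : ps) : (forall N, exists P Q, apx N f P /\ apx N g Q /\ P = Q) -> f = g.
Proof.
move=> h; apply: ps_ext => N; have [P [Q [h1 [h2 e]]]] := h N.
by exists P; split; [|rewrite e].
Qed.

Ltac apx_step := first [ apply: apx_add | apply: apx_mul | apply: apx_C | apply: apx_scale
  | apply: apx_mono | apply: apx_subst | apply: apx_trp ].
Ltac ps_trans := apply: ps_eq => ?; do 2 eexists; split; [repeat apx_step | split; [repeat apx_step | ]].
Ltac ev_simpl := rewrite ?ev_add ?ev_mul ?ev_cc ?ev_xx ?ev_yy ?cc0 ?cc1.

Definition substm (U : mat2) (u v : ps) : mat2 :=
  Mat2 (pssubst (m11 U) u v) (pssubst (m12 U) u v) (pssubst (m21 U) u v) (pssubst (m22 U) u v).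

Lemma matmulA (U V W : mat2) : matmul (matmul U V) W = matmul U (matmul V W).
Proof. by rewrite /matmul /=; congr Mat2; ps_trans; ring. Qed.

Lemma matmul1l (U : mat2) : matmul (mat1 F) U = U.
Proof. by case: U => a b c d; rewrite /matmul /=; congr Mat2; ps_trans; rewrite ?cc0 ?cc1; ring. Qed.

Lemma matmul1r (U : mat2) : matmul U (mat1 F) = U.
Proof. by case: U => a b c d; rewrite /matmul /=; congr Mat2; ps_trans; rewrite ?cc0 ?cc1; ring. Qed.

Lemma matappM (U V : mat2) (f : ps2) : matapp U (matapp V f) = matapp (matmul U V) f.
Proof. by case: f => f1 f2; rewrite /matapp /=; congr pair; ps_trans; ring. Qed.

Lemma matapp1 (f : ps2) : matapp (mat1 F) f = f.
Proof. by case: f => f1 f2; rewrite /matapp /=; congr pair; ps_trans; rewrite ?cc0 ?cc1; ring. Qed.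

Lemma subst_add (f g u v : ps) : u 0%N 0%N = 0 -> v 0%N 0%N = 0 ->
  pssubst (psadd f g) u v = psadd (pssubst f u v) (pssubst g u v).
Proof. by move=> hu hv; ps_trans; ev_simpl. Qed.

Lemma subst2_matapp (U : mat2) (f : ps2) (u v : ps) : u 0%N 0%N = 0 -> v 0%N 0%N = 0 ->
  subst2 (matapp U f) u v = matapp (substm U u v) (subst2 f u v).
Proof. by move=> hu hv; case: f => f1 f2; rewrite /matapp /subst2 /=; congr pair; ps_trans; ev_simpl. Qed.

Lemma substm_mul (U V : mat2) (u v : ps) : u 0%N 0%N = 0 -> v 0%N 0%N = 0 ->
  substm (matmul U V) u v = matmul (substm U u v) (substm V u v).
Proof. by move=> hu hv; rewrite /substm /matmul /=; congr Mat2; ps_trans; ev_simpl. Qed.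

Lemma substm_1 (u v : ps) : u 0%N 0%N = 0 -> v 0%N 0%N = 0 -> substm (mat1 F) u v = mat1 F.
Proof. by move=> hu hv; rewrite /substm /=; congr Mat2; ps_trans; ev_simpl. Qed.

Lemma subst00 (f u v : ps) : u 0%N 0%N = 0 -> v 0%N 0%N = 0 -> f 0%N 0%N = 0 ->
  pssubst f u v 0%N 0%N = 0.
Proof. by move=> hu hv hf; have [-> _ _] := subst_lin f hu hv. Qed.

Lemma subst_comp (f u v u' v' : ps) : u 0%N 0%N = 0 -> v 0%N 0%N = 0 ->
  u' 0%N 0%N = 0 -> v' 0%N 0%N = 0 ->
  pssubst (pssubst f u v) u' v' = pssubst f (pssubst u u' v') (pssubst v u' v').
Proof.
move=> hu hv hu' hv'.
have hu2 := subst00 hu' hv' hu; have hv2 := subst00 hu' hv' hv.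
by ps_trans; rewrite ?ev_comp.
Qed.

Lemma mono10 : psmono F 1 0 0%N 0%N = 0. Proof. by []. Qed.
Lemma mono01 : psmono F 0 1 0%N 0%N = 0. Proof. by []. Qed.

Lemma subst_id (f : ps) : pssubst f (psmono F 1 0) (psmono F 0 1) = f.
Proof.
have h1 := mono10; have h2 := mono01.
by ps_trans; rewrite ?expr1 ?expr0 ?mulr1 ?mul1r ?ev_id.
Qed.

Lemma GL2_mul (U V : mat2) : GL2 U -> GL2 V -> GL2 (matmul U V).
Proof.
move=> [U' [h1 h2]] [V' [h3 h4]]; exists (matmul V' U'); split.
  by rewrite matmulA -(matmulA V) h3 matmul1l.
by rewrite matmulA -(matmulA U') h2 matmul1l.
Qed.

Lemma GL2_subst (U : mat2) (u v : ps) : u 0%N 0%N = 0 -> v 0%N 0%N = 0 -> GL2 U -> GL2 (substm U u v).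
Proof.
move=> hu hv [U' [h1 h2]]; exists (substm U' u v).
by rewrite -!substm_mul // h1 h2 substm_1.
Qed.

Lemma cc_comp (u v u' v' : ps) : coord_change u v -> coord_change u' v' ->
  coord_change (pssubst u u' v') (pssubst v u' v').
Proof.
move=> [hu [hv hd]] [hu' [hv' hd']].
have [a1 a2 a3] := subst_lin u hu' hv'.
have [b1 b2 b3] := subst_lin v hu' hv'.
split; first by rewrite a1.
split; first by rewrite b1.
rewrite a2 a3 b2 b3.
set D := (X in X != 0).
have -> : D = (u 1%N 0%N * v 0%N 1%N - u 0%N 1%N * v 1%N 0%N) *
              (u' 1%N 0%N * v' 0%N 1%N - u' 0%N 1%N * v' 1%N 0%N) by rewrite /D; ring.
by rewrite mulf_neq0.
Qed.

Lemma subst2_comp (f : ps2) (u v u' v' : ps) : u 0%N 0%N = 0 -> v 0%N 0%N = 0 ->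
  u' 0%N 0%N = 0 -> v' 0%N 0%N = 0 ->
  subst2 (subst2 f u v) u' v' = subst2 f (pssubst u u' v') (pssubst v u' v').
Proof. by move=> *; rewrite /subst2 /= !subst_comp. Qed.

Lemma ce_trans (f g h : ps2) : contact_equiv f g -> contact_equiv g h -> contact_equiv f h.
Proof.
move=> [U [u [v [hU [hc ->]]]]] [V [u' [v' [hV [hc' ->]]]]].
have [hu [hv _]] := hc; have [hu' [hv' _]] := hc'.
exists (matmul V (substm U u' v')), (pssubst u u' v'), (pssubst v u' v').
split; first by apply: GL2_mul => //; apply: GL2_subst.
split; first exact: cc_comp.
by rewrite subst2_matapp // matappM subst2_comp.
Qed.

End Mat.

Section Lim.
Variable F : fieldType.
Local Notation A := {poly {poly F}}.
Local Notation ps := (ps F).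
Local Notation ps2 := (ps2 F).
Local Notation cc := (@cc F).
Local Notation xx := (@xx F).
Local Notation yy := (@yy F).
Local Notation ordge := (@ordge F).
Local Notation apx := (@apx F).
Local Notation trp := (@trp F).
Local Notation ev := (@ev F).
Local Notation mat2 := (mat2 F).

Ltac apx_step := first [ apply: apx_add | apply: apx_mul | apply: apx_C | apply: apx_scale
  | apply: apx_mono | apply: apx_subst | apply: apx_trp ].
Ltac ps_trans := apply: ps_eq => ?; do 2 eexists; split; [repeat apx_step | split; [repeat apx_step | ]].

Definition lim (S : nat -> A) : ps := fun i j => (S (i + j)%N)`_j`_i.

Definition coherent (S : nat -> A) := forall n m, (n <= m)%N -> ordge n.+1 (S m - S n).

Lemma lim_apx S n : coherent S -> apx n (lim S) (S n).
Proof.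
move=> hS i j h; rewrite /lim.
have := hS _ _ h i j (ltnSn _); rewrite !coefB => /eqP; rewrite subr_eq0 => /eqP ->; done.
Qed.

Lemma coherent_step S : (forall n, ordge n.+1 (S n.+1 - S n)) -> coherent S.
Proof.
move=> h n m /subnK <-; elim: (m - n)%N => [|k IH]; first by rewrite add0n subrr; apply: ordge0.
rewrite addSn (_ : S (k + n).+1 - S n = (S (k + n).+1 - S (k + n)%N) + (S (k + n)%N - S n)); last by ring.
apply: ordgeD => //; apply: ordge_le (h _); lia.
Qed.

Lemma ordge_apx_diff N M f : (N <= M)%N -> ordge N.+1 (trp M f - trp N f).
Proof.
move=> hNM i j h; have h1 : (i + j <= N)%N by lia.
have h2 : (i + j <= M)%N by lia.
by rewrite !coefB -(@apx_trp _ M f _ _ h2) -(@apx_trp _ N f _ _ h1) subrr.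
Qed.

Lemma ccM a b : cc (a * b) = cc a * cc b.
Proof. by rewrite /cc !polyCM. Qed.
Lemma ccD a b : cc (a + b) = cc a + cc b.
Proof. by rewrite /cc !polyCD. Qed.
Lemma ccN a : cc (- a) = - cc a.
Proof. by rewrite /cc !polyCN. Qed.
Lemma ccB a b : cc (a - b) = cc a - cc b.
Proof. by rewrite ccD ccN. Qed.

Lemma psmul00 (f g : ps) : psmul f g 0%N 0%N = f 0%N 0%N * g 0%N 0%N.
Proof. by rewrite /psmul !big_ord1 !subn0. Qed.

Lemma ps_inv (d : ps) : d 0%N 0%N != 0 -> exists w, psmul d w = psC 1.
Proof.
move=> hd; set c := (d 0%N 0%N)^-1.
pose E n : A := 1 - cc c * trp n d.
pose W n : A := cc c * \sum_(k < n.+1) E n ^+ k.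
have hE : forall n, ordge 1 (E n).
  move=> n i j h; have hi : i = 0%N by lia.
  have hj : j = 0%N by lia.
  by subst; rewrite /E !coefB coef_ccM -(apx_trp d) // !coef1 /= /c mulVf // subrr.
have hDW : forall n, ordge n.+1 (1 - trp n d * W n).
  move=> m; rewrite /W.
  have -> : 1 - trp m d * (cc c * \sum_(k < m.+1) E m ^+ k) = E m ^+ m.+1.
    have -> : trp m d * (cc c * \sum_(k < m.+1) E m ^+ k) = (1 - E m) * \sum_(k < m.+1) E m ^+ k.
      by rewrite /E; ring.
    rewrite (_ : (1 - E m) = - (E m - 1)); last by ring.
    by rewrite mulNr -subrX1; ring.
  by have := ordgeX (n := m.+1) (hE m); rewrite mul1n.
have coh : coherent W.
  move=> n m hnm.
  rewrite (_ : W m - W n = W m * (1 - trp n d * W n) - W n * (1 - trp m d * W m)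
     - W m * W n * (trp m d - trp n d)); last by ring.
  apply: ordgeB; last exact: ordgeMl (ordge_apx_diff d hnm).
  apply: ordgeB; first exact: ordgeMl (hDW n).
  by apply: ordgeMl; apply: ordge_le (hDW m); lia.
exists (lim W); apply: ps_ext => N; exists 1; split.
  apply: apx_congr (apx_mul (apx_trp d) (lim_apx (n:=N) coh)) _.
  exact: hDW.
by rewrite -cc1; apply: apx_C.
Qed.

Lemma GL2_det (U : mat2) :
  m11 U 0%N 0%N * m22 U 0%N 0%N - m12 U 0%N 0%N * m21 U 0%N 0%N != 0 -> GL2 U.
Proof.
case: U => a b c e /= hd.
pose d := psadd (psmul a e) (psscale (-1) (psmul b c)).
have hd0 : d 0%N 0%N != 0.
  by rewrite /d /psadd /psscale !psmul00 mulN1r.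
have [w hw] := ps_inv hd0.
exists (Mat2 (psmul w e) (psscale (-1) (psmul w b))
             (psscale (-1) (psmul w c)) (psmul w a)).
rewrite /matmul /mat1 /=; split; congr Mat2.
all: first [ by rewrite -hw /d; ps_trans; rewrite ?ccN ?cc1; ring
           | by ps_trans; rewrite ?cc0 ?ccN ?cc1; ring ].
Qed.

End Lim.

Section IFT.
Variable F : fieldType.
Local Notation A := {poly {poly F}}.
Local Notation ps := (ps F).
Local Notation ps2 := (ps2 F).
Local Notation cc := (@cc F).
Local Notation xx := (@xx F).
Local Notation yy := (@yy F).
Local Notation ordge := (@ordge F).
Local Notation apx := (@apx F).
Local Notation trp := (@trp F).
Local Notation ev := (@ev F).
Local Notation mat2 := (mat2 F).

Lemma ev00 P U V : ordge 1 U -> ordge 1 V -> (ev P U V)`_0`_0 = P`_0`_0.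
Proof.
move=> hU hV; have := @ev_lin F P U V hU hV 0 0 (erefl _).
rewrite !coefB => /eqP; rewrite subr_eq0 => /eqP ->.
by rewrite !coefD !coef_ccM coef_cc /= hU // hV // !mulr0 !addr0.
Qed.

Lemma alg_ift1 (R : comNzRingType) (a b c e q X EU EU' d1 d2 r1 r2 : R) :
  a * e * q = 1 + b * c * q -> d1 = e * q * r1 - b * q * r2 -> d2 = a * q * r2 - c * q * r1 ->
  r1 = X - EU -> X - EU' = - (EU' - EU - (a * d1 + b * d2)).
Proof. by move=> h -> -> ->; ring: h. Qed.

Lemma alg_ift2 (R : comNzRingType) (a b c e q Y EV EV' d1 d2 r1 r2 : R) :
  a * e * q = 1 + b * c * q -> d1 = e * q * r1 - b * q * r2 -> d2 = a * q * r2 - c * q * r1 ->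
  r2 = Y - EV -> Y - EV' = - (EV' - EV - (c * d1 + e * d2)).
Proof. by move=> h -> -> ->; ring: h. Qed.

Definition ift_step (u v : ps) (n : nat) (ST : A * A) : A * A :=
  let: (Sx, Tx) := ST in
  let Di := (u 1%N 0%N * v 0%N 1%N - u 0%N 1%N * v 1%N 0%N)^-1 in
  let r1 := xx - ev (trp n u) Sx Tx in
  let r2 := yy - ev (trp n v) Sx Tx in
  (Sx + (cc (v 0%N 1%N * Di) * r1 - cc (u 0%N 1%N * Di) * r2),
   Tx + (cc (u 1%N 0%N * Di) * r2 - cc (v 1%N 0%N * Di) * r1)).

Fixpoint ift_seq (u v : ps) (n : nat) : A * A :=
  match n with 0%N => (0, 0) | n'.+1 => ift_step u v n (ift_seq u v n') end.

Lemma ift_step_ok (u v : ps) n Sx Tx : coord_change u v -> (1 <= n)%N ->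
  ordge 1 Sx -> ordge 1 Tx -> ordge n (xx - ev (trp n u) Sx Tx) -> ordge n (yy - ev (trp n v) Sx Tx) ->
  let ST' := ift_step u v n (Sx, Tx) in
  [/\ ordge n (ST'.1 - Sx), ordge n (ST'.2 - Tx), ordge n.+1 (xx - ev (trp n u) ST'.1 ST'.2) &
      ordge n.+1 (yy - ev (trp n v) ST'.1 ST'.2)].
Proof.
move=> [hu [hv hD]] hn hS hT h1 h2 /=.
set a := u 1%N 0%N; set b := u 0%N 1%N; set c := v 1%N 0%N; set e := v 0%N 1%N.
set Di := (a * e - b * c)^-1.
set r1 := xx - ev (trp n u) Sx Tx; set r2 := yy - ev (trp n v) Sx Tx.
set d1 := cc (e * Di) * r1 - cc (b * Di) * r2.
set d2 := cc (a * Di) * r2 - cc (c * Di) * r1.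
have o1 : ordge n d1 by apply: ordgeB; apply: ordgeMl.
have o2 : ordge n d2 by apply: ordgeB; apply: ordgeMl.
have e1 : Sx + d1 - Sx = d1 by rewrite addrC addKr.
have e2 : Tx + d2 - Tx = d2 by rewrite addrC addKr.
have hDi : cc a * cc e * cc Di = 1 + cc b * cc c * cc Di.
  apply/eqP; rewrite -subr_eq; apply/eqP.
  by rewrite -!ccM -ccB -mulrBl /Di mulfV // cc1.
have d1e : d1 = cc e * cc Di * r1 - cc b * cc Di * r2 by rewrite /d1 !ccM.
have d2e : d2 = cc a * cc Di * r2 - cc c * cc Di * r1 by rewrite /d2 !ccM.
have tu := @ev_taylor F (trp n u) Sx Tx (Sx + d1) (Tx + d2) n hS hT.
rewrite e1 e2 in tu; have {}tu := tu o1 o2 hn.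
have tv := @ev_taylor F (trp n v) Sx Tx (Sx + d1) (Tx + d2) n hS hT.
rewrite e1 e2 in tv; have {}tv := tv o1 o2 hn.
have ca : (trp n u)`_0`_1 = a by rewrite -(apx_trp u).
have cb : (trp n u)`_1`_0 = b by rewrite -(apx_trp u).
have cc' : (trp n v)`_0`_1 = c by rewrite -(apx_trp v).
have ce : (trp n v)`_1`_0 = e by rewrite -(apx_trp v).
rewrite ca cb in tu; rewrite cc' ce in tv.
rewrite e1 e2; split => //.
- by rewrite (alg_ift1 _ hDi d1e d2e (erefl r1)); apply: ordgeN.
- by rewrite (alg_ift2 _ hDi d1e d2e (erefl r2)); apply: ordgeN.
Qed.

Lemma ift_next (u v : ps) n : coord_change u v ->
  ordge 1 (ift_seq u v n).1 -> ordge 1 (ift_seq u v n).2 ->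
  ordge n.+1 (xx - ev (trp n u) (ift_seq u v n).1 (ift_seq u v n).2) ->
  ordge n.+1 (yy - ev (trp n v) (ift_seq u v n).1 (ift_seq u v n).2) ->
  [/\ ordge n.+1 ((ift_seq u v n.+1).1 - (ift_seq u v n).1),
      ordge n.+1 ((ift_seq u v n.+1).2 - (ift_seq u v n).2),
      ordge n.+2 (xx - ev (trp n.+1 u) (ift_seq u v n.+1).1 (ift_seq u v n.+1).2) &
      ordge n.+2 (yy - ev (trp n.+1 v) (ift_seq u v n.+1).1 (ift_seq u v n.+1).2)].
Proof.
move=> hc; rewrite [ift_seq u v n.+1]/=; case: (ift_seq u v n) => Sx Tx /= h1 h2 h3 h4.
have o1 : ordge 1 (xx - xx) by rewrite subrr; apply: ordge0.
have hx : ordge n.+1 (xx - ev (trp n.+1 u) Sx Tx).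
  rewrite (_ : _ - _ = (xx - ev (trp n u) Sx Tx) - ev (trp n.+1 u - trp n u) Sx Tx);
    last by rewrite ev_sub; ring.
  by apply: ordgeB => //; apply: ev_ordge => //; apply: ordge_apx_diff.
have hy : ordge n.+1 (yy - ev (trp n.+1 v) Sx Tx).
  rewrite (_ : _ - _ = (yy - ev (trp n v) Sx Tx) - ev (trp n.+1 v - trp n v) Sx Tx);
    last by rewrite ev_sub; ring.
  by apply: ordgeB => //; apply: ev_ordge => //; apply: ordge_apx_diff.
exact: (@ift_step_ok u v n.+1 Sx Tx hc (ltn0Sn _) h1 h2 hx hy).
Qed.

Lemma ift_inv (u v : ps) n : coord_change u v ->
  [/\ ordge 1 (ift_seq u v n).1, ordge 1 (ift_seq u v n).2,
      ordge n.+1 (xx - ev (trp n u) (ift_seq u v n).1 (ift_seq u v n).2) &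
      ordge n.+1 (yy - ev (trp n v) (ift_seq u v n).1 (ift_seq u v n).2)].
Proof.
move=> hc; have [hu [hv _]] := hc.
elim: n => [|n [h1 h2 h3 h4]].
  split => /=; try exact: ordge0.
  - move=> i j h; have hi : i = 0%N by lia.
    have hj : j = 0%N by lia.
    subst; rewrite !coefB (ev00 _ (@ordge0 F 1) (@ordge0 F 1)) coef_xx -(apx_trp u) // hu subrr //.
  - move=> i j h; have hi : i = 0%N by lia.
    have hj : j = 0%N by lia.
    subst; rewrite !coefB (ev00 _ (@ordge0 F 1) (@ordge0 F 1)) coef_yy -(apx_trp v) // hv subrr //.
have [d1 d2 h3' h4'] := ift_next hc h1 h2 h3 h4.
split => //.
- rewrite -(subrK (ift_seq u v n).1 (ift_seq u v n.+1).1); apply: ordgeD => //.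
  exact: ordge_le d1.
- rewrite -(subrK (ift_seq u v n).2 (ift_seq u v n.+1).2); apply: ordgeD => //.
  exact: ordge_le d2.
Qed.

Lemma right_inv (u v : ps) : coord_change u v -> exists s t : ps, coord_change s t /\
  pssubst u s t = psmono F 1 0 /\ pssubst v s t = psmono F 0 1.
Proof.
move=> hc; have [hu [hv hD]] := hc.
pose S n := (ift_seq u v n).1; pose T n := (ift_seq u v n).2.
have cohS : coherent S.
  apply: coherent_step => n; have [h1 h2 h3 h4] := ift_inv n hc.
  by have [] := ift_next hc h1 h2 h3 h4.
have cohT : coherent T.
  apply: coherent_step => n; have [h1 h2 h3 h4] := ift_inv n hc.
  by have [] := ift_next hc h1 h2 h3 h4.
have s0 : lim S 0%N 0%N = 0 by rewrite /lim /S /= !coef0.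
have t0 : lim T 0%N 0%N = 0 by rewrite /lim /T /= !coef0.
have eu : pssubst u (lim S) (lim T) = psmono F 1 0.
  apply: ps_ext => N; have [h1 h2 h3 h4] := ift_inv N hc.
  exists (ev (trp N u) (S N) (T N)); split.
    exact: apx_subst (apx_trp u) (lim_apx (n:=N) cohS) (lim_apx (n:=N) cohT) s0 t0.
  apply: apx_congr (@apx_mono F N 1 0) _.
  rewrite expr1 expr0 mulr1 -opprB; exact: ordgeN.
have ev' : pssubst v (lim S) (lim T) = psmono F 0 1.
  apply: ps_ext => N; have [h1 h2 h3 h4] := ift_inv N hc.
  exists (ev (trp N v) (S N) (T N)); split.
    exact: apx_subst (apx_trp v) (lim_apx (n:=N) cohS) (lim_apx (n:=N) cohT) s0 t0.
  apply: apx_congr (@apx_mono F N 0 1) _.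
  rewrite expr1 expr0 mul1r -opprB; exact: ordgeN.
exists (lim S), (lim T); split => //; split => //; split => //.
have [_ a2 a3] := subst_lin u s0 t0; have [_ b2 b3] := subst_lin v s0 t0.
rewrite eu in a2 a3; rewrite ev' in b2 b3.
apply/eqP => hz.
have : (u 1%N 0%N * v 0%N 1%N - u 0%N 1%N * v 1%N 0%N) *
   (lim S 1%N 0%N * lim T 0%N 1%N - lim S 0%N 1%N * lim T 1%N 0%N) = 1.
  rewrite (_ : _ * _ = psmono F 1 0 1%N 0%N * psmono F 0 1 0%N 1%N
                        - psmono F 1 0 0%N 1%N * psmono F 0 1 1%N 0%N).
    by rewrite /psmono /= mulr1 mulr0 subr0.
  rewrite a2 a3 b2 b3; ring.
by rewrite hz mulr0 => /eqP; rewrite eq_sym oner_eq0.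
Qed.

Lemma ce_sym (f g : ps2) : contact_equiv f g -> contact_equiv g f.
Proof.
move=> [U [u [v [[V [hUV hVU]] [hc ->]]]]].
have [s [t [hst [eu ev']]]] := right_inv hc.
have [hs [ht _]] := hst.
exists (substm V s t), s, t; split.
  by apply: GL2_subst => //; exists U.
split => //.
rewrite subst2_matapp // subst2_comp //; last by case: hc => ? [].
  rewrite eu ev' matappM -substm_mul // hVU substm_1 // matapp1.
  by case: f => f1 f2; rewrite /subst2 /= !subst_id.
by case: hc.
Qed.

End IFT.

Section CL.
Variable F : fieldType.
Local Notation A := {poly {poly F}}.
Local Notation ps := (ps F).
Local Notation ps2 := (ps2 F).
Local Notation cc := (@cc F).
Local Notation xx := (@xx F).
Local Notation yy := (@yy F).
Local Notation ordge := (@ordge F).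
Local Notation apx := (@apx F).
Local Notation trp := (@trp F).
Local Notation ev := (@ev F).
Local Notation mat2 := (mat2 F).

Record pm := PM { q11 : A; q12 : A; q21 : A; q22 : A }.
Definition pmapp1 (M : pm) (h1 h2 : A) := q11 M * h1 + q12 M * h2.
Definition pmapp2 (M : pm) (h1 h2 : A) := q21 M * h1 + q22 M * h2.
Definition ordm k (M : pm) :=
  [/\ ordge k (q11 M), ordge k (q12 M), ordge k (q21 M) & ordge k (q22 M)].

Variables (nf : ps2) (H1 H2 L1 L2 : A -> A -> A) (sol : A -> A -> pm * (A * A)).
Hypothesis hsub : forall N u v P Q, u 0%N 0%N = 0 -> v 0%N 0%N = 0 -> apx N u P -> apx N v Q ->
  apx N (pssubst nf.1 u v) (H1 P Q) /\ apx N (pssubst nf.2 u v) (H2 P Q).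
Hypothesis h0 : forall N, apx N nf.1 (H1 xx yy) /\ apx N nf.2 (H2 xx yy).
Hypothesis hC1 : forall m p q d e, (2 <= m)%N -> ordge 2 (p - xx) -> ordge 2 (q - yy) ->
  ordge m d -> ordge m e ->
  ordge (m + 3) (H1 (p + d) (q + e) - H1 p q - L1 d e) /\
  ordge (m + 3) (H2 (p + d) (q + e) - H2 p q - L2 d e).
Hypothesis hC2 : forall k d e, ordge k d -> ordge k e ->
  ordge (k + 2) (L1 d e) /\ ordge (k + 2) (L2 d e).
Hypothesis hC3 : forall k r1 r2, (4 <= k)%N -> ordge k r1 -> ordge k r2 ->
  [/\ r1 = pmapp1 (sol r1 r2).1 (H1 xx yy) (H2 xx yy) + L1 (sol r1 r2).2.1 (sol r1 r2).2.2,
      r2 = pmapp2 (sol r1 r2).1 (H1 xx yy) (H2 xx yy) + L2 (sol r1 r2).2.1 (sol r1 r2).2.2,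
      ordm (k - 3) (sol r1 r2).1, ordge (k - 2) (sol r1 r2).2.1 & ordge (k - 2) (sol r1 r2).2.2].

Variable g : ps2.
Hypothesis hg : jet_eq 3 g nf.

Definition Cstep (n : nat) (s : pm * (A * A)) : pm * (A * A) :=
  let: (M, (p, q)) := s in
  let r1 := trp n.+4 g.1 - pmapp1 M (H1 p q) (H2 p q) in
  let r2 := trp n.+4 g.2 - pmapp2 M (H1 p q) (H2 p q) in
  let: (E, (d, e)) := sol r1 r2 in
  (PM (q11 M + q11 E) (q12 M + q12 E) (q21 M + q21 E) (q22 M + q22 E), (p + d, q + e)).

Fixpoint Cseq (n : nat) : pm * (A * A) :=
  match n with 0%N => (PM 1 0 0 1, (xx, yy)) | n'.+1 => Cstep n' (Cseq n') end.

Definition Inv (n : nat) (s : pm * (A * A)) :=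
  let: (M, (p, q)) := s in
  (ordge 1 (q11 M - 1) /\ ordge 1 (q12 M) /\ ordge 1 (q21 M) /\ ordge 1 (q22 M - 1)) /\
  (ordge 2 (p - xx) /\ ordge 2 (q - yy)) /\
  (apx (n + 3) g.1 (pmapp1 M (H1 p q) (H2 p q)) /\ apx (n + 3) g.2 (pmapp2 M (H1 p q) (H2 p q))).

Lemma apx_of_ord N f (P Q : A) : apx N f Q -> ordge N.+1 (Q - P) -> apx N f P.
Proof.
move=> h hd i j hij; rewrite h //.
by move/eqP: (hd i j hij); rewrite !coefB subr_eq0 => /eqP.
Qed.

Lemma ord_of_apx N f (P Q : A) : apx N f Q -> apx N f P -> ordge N.+1 (Q - P).
Proof. by move=> h1 h2 i j hij; rewrite !coefB -h1 -?h2 ?subrr //; lia. Qed.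

Lemma ordge_sub0 k (P : A) : ordge k (P - P).
Proof. by rewrite subrr; exact: ordge0. Qed.

Lemma Inv0 : Inv 0 (Cseq 0).
Proof.
rewrite /Inv /=; split.
  split; [exact: ordge_sub0|split; [exact: ordge0|split; [exact: ordge0|exact: ordge_sub0]]].
split; first by split; exact: ordge_sub0.
rewrite /pmapp1 /pmapp2 mul1r mul0r addr0 mul0r add0r mul1r.
have [a1 a2] := h0 3.
split => i j hij; have [e1 e2] := @hg i j hij; [rewrite e1; exact: a1 | rewrite e2; exact: a2].
Qed.

Lemma Cstep_ok n s : Inv n s ->
  Inv n.+1 (Cstep n s) /\
  (ordm n.+1 (PM (q11 (Cstep n s).1 - q11 s.1) (q12 (Cstep n s).1 - q12 s.1)
                 (q21 (Cstep n s).1 - q21 s.1) (q22 (Cstep n s).1 - q22 s.1)) /\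
   ordge n.+2 ((Cstep n s).2.1 - s.2.1) /\ ordge n.+2 ((Cstep n s).2.2 - s.2.2)).
Proof.
case: s => M [p q] [[m11 [m12 [m21 m22]]] [[op oq] [a1 a2]]].
rewrite /Cstep.
set r1 := trp n.+4 g.1 - _.
set r2 := trp n.+4 g.2 - _.
have or1 : ordge (n + 4) r1.
  move=> i j hij; rewrite /r1 !coefB -(apx_trp g.1); last by lia.
  by rewrite a1 ?subrr //; lia.
have or2 : ordge (n + 4) r2.
  move=> i j hij; rewrite /r2 !coefB -(apx_trp g.2); last by lia.
  by rewrite a2 ?subrr //; lia.
have := hC3 (k := (n + 4)%N) (leq_addl _ _) or1 or2.
case: (sol r1 r2) => E [d e] /= [eq1 eq2 [oE11 oE12 oE21 oE22] od oe].
have k3 : (n + 4 - 3 = n.+1)%N by lia.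
have k2 : (n + 4 - 2 = n.+2)%N by lia.
rewrite k3 in oE11 oE12 oE21 oE22; rewrite k2 in od oe.
have op' : ordge 2 (p + d - xx).
  rewrite (_ : p + d - xx = (p - xx) + d); last by ring.
  by apply: ordgeD => //; apply: ordge_le od; lia.
have oq' : ordge 2 (q + e - yy).
  rewrite (_ : q + e - yy = (q - yy) + e); last by ring.
  by apply: ordgeD => //; apply: ordge_le oe; lia.
have o0 : ordge 2 (xx - xx) by rewrite subrr; exact: ordge0.
have o0' : ordge 2 (yy - yy) by rewrite subrr; exact: ordge0.
have [t1 t2] := hC1 (m := 2) (p := xx) (q := yy) (leqnn _) o0 o0' op' oq'.
rewrite !(addrC xx) !(addrC yy) !subrK in t1 t2.
have [l1 l2] := hC2 op' oq'.
have hH1 : ordge 4 (H1 (p + d) (q + e) - H1 xx yy).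
  rewrite (_ : _ - _ = (H1 (p + d) (q + e) - H1 xx yy - L1 (p + d - xx) (q + e - yy))
                        + L1 (p + d - xx) (q + e - yy)); last by ring.
  by apply: ordgeD => //; apply: ordge_le t1.
have hH2 : ordge 4 (H2 (p + d) (q + e) - H2 xx yy).
  rewrite (_ : _ - _ = (H2 (p + d) (q + e) - H2 xx yy - L2 (p + d - xx) (q + e - yy))
                        + L2 (p + d - xx) (q + e - yy)); last by ring.
  by apply: ordgeD => //; apply: ordge_le t2.
have h2n : (2 <= n.+2)%N by [].
have [c1 c2] := hC1 h2n op oq od oe.
have [ld1 ld2] := hC2 od oe.
rewrite (_ : (n.+2 + 3 = n + 5)%N) in c1 c2; last by lia.
rewrite (_ : (n.+2 + 2 = n + 4)%N) in ld1 ld2; last by lia.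
have e4 : (n.+1 + 3 = n.+4)%N by lia.
have ep1 : trp n.+4 g.1 = r1 + pmapp1 M (H1 p q) (H2 p q) by rewrite /r1 subrK.
have ep2 : trp n.+4 g.2 = r2 + pmapp2 M (H1 p q) (H2 p q) by rewrite /r2 subrK.
have oE : forall k X, (k <= n.+1)%N -> X = q11 E \/ X = q12 E \/ X = q21 E \/ X = q22 E -> ordge k X.
  move=> k X hk [->|[->|[->|->]]]; apply: ordge_le hk _; assumption.
split; last first.
  rewrite /=; split; last by rewrite !(addrC p) !(addrC q) !addrK.
  by rewrite /ordm /= !(addrC (q11 M)) !(addrC (q12 M)) !(addrC (q21 M)) !(addrC (q22 M)) !addrK.
rewrite /Inv /=; split.
  split; first by rewrite addrAC; apply: ordgeD => //; apply: oE; auto.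
  split; first by apply: ordgeD => //; apply: oE; auto.
  split; first by apply: ordgeD => //; apply: oE; auto.
  by rewrite addrAC; apply: ordgeD => //; apply: oE; auto.
split; first by split.
rewrite e4; split.
- apply: apx_of_ord (apx_trp g.1) _.
  rewrite ep1 eq1 /pmapp1 /=.
  rewrite (_ : _ - _ = - (q11 E * (H1 (p + d) (q + e) - H1 xx yy) + q12 E * (H2 (p + d) (q + e) - H2 xx yy))
      - ((q11 M - 1) * L1 d e + q12 M * L2 d e)
      - (q11 M * (H1 (p + d) (q + e) - H1 p q - L1 d e) + q12 M * (H2 (p + d) (q + e) - H2 p q - L2 d e)));
    last by ring.
  apply: ordgeB; first apply: ordgeB; first apply: ordgeN.
  + apply: ordgeD; [apply: ordge_le (ordgeM oE11 hH1) | apply: ordge_le (ordgeM oE12 hH2)]; lia.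
  + apply: ordgeD; [apply: ordge_le (ordgeM m11 ld1) | apply: ordge_le (ordgeM m12 ld2)]; lia.
  + apply: ordgeD; apply: ordgeMl; [apply: ordge_le c1 | apply: ordge_le c2]; lia.
- apply: apx_of_ord (apx_trp g.2) _.
  rewrite ep2 eq2 /pmapp2 /=.
  rewrite (_ : _ - _ = - (q21 E * (H1 (p + d) (q + e) - H1 xx yy) + q22 E * (H2 (p + d) (q + e) - H2 xx yy))
      - (q21 M * L1 d e + (q22 M - 1) * L2 d e)
      - (q21 M * (H1 (p + d) (q + e) - H1 p q - L1 d e) + q22 M * (H2 (p + d) (q + e) - H2 p q - L2 d e)));
    last by ring.
  apply: ordgeB; first apply: ordgeB; first apply: ordgeN.
  + apply: ordgeD; [apply: ordge_le (ordgeM oE21 hH1) | apply: ordge_le (ordgeM oE22 hH2)]; lia.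
  + apply: ordgeD; [apply: ordge_le (ordgeM m21 ld1) | apply: ordge_le (ordgeM m22 ld2)]; lia.
  + apply: ordgeD; apply: ordgeMl; [apply: ordge_le c1 | apply: ordge_le c2]; lia.
Qed.

Lemma Inv_all n : Inv n (Cseq n).
Proof. elim: n => [|n IH]; first exact: Inv0. by have [] := Cstep_ok IH. Qed.

Lemma coh_all :
  [/\ coherent (fun n => q11 (Cseq n).1), coherent (fun n => q12 (Cseq n).1),
      coherent (fun n => q21 (Cseq n).1), coherent (fun n => q22 (Cseq n).1) &
      coherent (fun n => (Cseq n).2.1) /\ coherent (fun n => (Cseq n).2.2)].
Proof.
have h : forall n, ordm n.+1 (PM (q11 (Cseq n.+1).1 - q11 (Cseq n).1) (q12 (Cseq n.+1).1 - q12 (Cseq n).1)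
                 (q21 (Cseq n.+1).1 - q21 (Cseq n).1) (q22 (Cseq n.+1).1 - q22 (Cseq n).1)) /\
   ordge n.+2 ((Cseq n.+1).2.1 - (Cseq n).2.1) /\ ordge n.+2 ((Cseq n.+1).2.2 - (Cseq n).2.2).
  by move=> n; have [_ h] := Cstep_ok (Inv_all n).
split; try (apply: coherent_step => n; have [[h1 h2 h3 h4] [h5 h6]] := h n; done).
split; apply: coherent_step => n; have [[h1 h2 h3 h4] [h5 h6]] := h n; exact: ordge_le h5 || exact: ordge_le h6.
Qed.

Theorem CL_main : contact_equiv nf g.
Proof.
have [c11 c12 c21 c22 [cP cQ]] := coh_all.
set U := Mat2 (lim (fun n => q11 (Cseq n).1)) (lim (fun n => q12 (Cseq n).1))
              (lim (fun n => q21 (Cseq n).1)) (lim (fun n => q22 (Cseq n).1)).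
set u := lim (fun n => (Cseq n).2.1); set v := lim (fun n => (Cseq n).2.2).
have u0 : u 0%N 0%N = 0 by rewrite /u /lim /= coef_xx.
have v0 : v 0%N 0%N = 0 by rewrite /v /lim /= coef_yy.
have I1 := Inv_all 1; move: I1; rewrite /Inv.
case E1 : (Cseq 1) => [M1 [p1 q1]] [_ [[o1 o2] _]].
have co : forall (X Y : A) i j, ordge 2 (X - Y) -> (i + j < 2)%N -> X`_j`_i = Y`_j`_i.
  by move=> X Y i j h hij; move/eqP: (h i j hij); rewrite !coefB subr_eq0 => /eqP.
exists U, u, v; split.
  apply: GL2_det; rewrite /U /lim /= !coef1 !coef0 /= ?mulr1 ?mulr0 ?subr0; exact: oner_neq0.
split.
  split => //; split => //.
  rewrite /u /v /lim ?addn0 ?add0n E1 /= (co _ _ 1 0 o1) // (co _ _ 0 1 o1) // (co _ _ 1 0 o2) // (co _ _ 0 1 o2) //.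
  by rewrite !coef_xx !coef_yy /= mulr1 mulr0 subr0 oner_neq0.
have e1 : g.1 = (matapp U (subst2 nf u v)).1.
  apply: ps_ext => N; have IN := Inv_all N; move: IN; rewrite /Inv.
  case E : (Cseq N) => [M [p q]] [_ [_ [a1 a2]]].
  exists (pmapp1 M (H1 p q) (H2 p q)); split; first by apply: apx_le a1; lia.
  have [s1 s2] := hsub u0 v0 (lim_apx (n:=N) cP) (lim_apx (n:=N) cQ).
  rewrite E /= in s1 s2.
  rewrite /matapp /subst2 /pmapp1 /=; apply: apx_add; apply: apx_mul => //.
    by have := lim_apx (n:=N) c11; rewrite E.
  by have := lim_apx (n:=N) c12; rewrite E.
have e2 : g.2 = (matapp U (subst2 nf u v)).2.
  apply: ps_ext => N; have IN := Inv_all N; move: IN; rewrite /Inv.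
  case E : (Cseq N) => [M [p q]] [_ [_ [a1 a2]]].
  exists (pmapp2 M (H1 p q) (H2 p q)); split; first by apply: apx_le a2; lia.
  have [s1 s2] := hsub u0 v0 (lim_apx (n:=N) cP) (lim_apx (n:=N) cQ).
  rewrite E /= in s1 s2.
  rewrite /matapp /subst2 /pmapp2 /=; apply: apx_add; apply: apx_mul => //.
    by have := lim_apx (n:=N) c21; rewrite E.
  by have := lim_apx (n:=N) c22; rewrite E.
by move: e1 e2; case: (matapp U (subst2 nf u v)) => m1 m2 /= <- <-; case: g hg.
Qed.

End CL.

Section NFgen.
Variable F : fieldType.
Local Notation A := {poly {poly F}}.
Local Notation ps := (ps F).
Local Notation ps2 := (ps2 F).
Local Notation cc := (@cc F).
Local Notation xx := (@xx F).
Local Notation yy := (@yy F).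
Local Notation ordge := (@ordge F).
Local Notation apx := (@apx F).
Local Notation trp := (@trp F).
Local Notation ev := (@ev F).
Local Notation bnd := (@bnd F).

Definition dA (c : nat) (P : A) : A :=
  \poly_(j < bnd P) \poly_(i < bnd P)
    (if c == 4%N then P`_j`_(i + 4) else if i == 0%N then P`_(j + (4 - c))`_c else 0).

Lemma bnd_coef (P : A) i j : (bnd P <= j)%N || (bnd P <= i)%N -> P`_j`_i = 0.
Proof.
case/orP => h.
  have -> : P`_j = 0 by apply: nth_default; apply: leq_trans (bnd_size P) h.
  by rewrite coef0.
by rewrite (nth_default _ (leq_trans (bnd_sizeb P j) h)).
Qed.

Lemma coef_dA c P i j : (dA c P)`_j`_i =
  if c == 4%N then P`_j`_(i + 4) else if i == 0%N then P`_(j + (4 - c))`_c else 0.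
Proof.
rewrite /dA coef_poly; case: ltnP => hj; last first.
  rewrite coef0; case: ifP => _; first by rewrite bnd_coef ?hj.
  by case: ifP => _ //; rewrite bnd_coef //; apply/orP; left; lia.
rewrite coef_poly; case: ltnP => hi //.
case: ifP => _; first by rewrite bnd_coef //; apply/orP; right; lia.
case: ifP => // /eqP hi0; subst i.
rewrite bnd_coef //; apply/orP; left; lia.
Qed.

Lemma coef_monoM a b Q i j : (xx ^+ a * yy ^+ b * Q)`_j`_i =
  if (a <= i)%N && (b <= j)%N then Q`_(j - b)`_(i - a) else 0.
Proof.
rewrite -mulrA /xx -rmorphXn /= coefCM /yy !coefXnM.
case: (ltnP j b) => hj; case: (ltnP i a) => hi //=; by rewrite ?coef0 ?mulr0 ?andbF.
Qed.

Lemma decomp (P : A) : ordge 4 P ->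
  P = xx ^+ 4 * yy ^+ 0 * dA 4 P + xx ^+ 3 * yy ^+ 1 * dA 3 P + xx ^+ 2 * yy ^+ 2 * dA 2 P
      + xx ^+ 1 * yy ^+ 3 * dA 1 P + xx ^+ 0 * yy ^+ 4 * dA 0 P.
Proof.
move=> hP; apply/polyP => j; apply/polyP => i.
rewrite !coefD !coef_monoM !coef_dA /=.
case: i => [|[|[|[|i]]]] /=; rewrite ?if_same ?add0r ?addr0.
1-4: case: ltnP => hj; [rewrite (_ : (j - _ + _)%N = j) //; lia | by rewrite hP //; lia].
by rewrite subn0 (_ : (i.+4 - 4 + 4 = i.+4)%N) //; lia.
Qed.

Lemma dA_ord k c P : (c <= 4)%N -> ordge k P -> ordge (k - 4) (dA c P).
Proof.
move=> hc hP i j hij; rewrite coef_dA.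
case: eqP => [hc4|hc4]; first by subst c; rewrite hP //; lia.
case: eqP => // hi; subst i; rewrite hP //; lia.
Qed.

End NFgen.

Section NFchar2.
Variable F : fieldType.
Hypothesis h2 : (2%:R : F) = 0.
Local Notation A := {poly {poly F}}.
Local Notation ps := (ps F).
Local Notation ps2 := (ps2 F).
Local Notation cc := (@cc F).
Local Notation xx := (@xx F).
Local Notation yy := (@yy F).
Local Notation ordge := (@ordge F).
Local Notation apx := (@apx F).
Local Notation trp := (@trp F).
Local Notation ev := (@ev F).
Local Notation dA := (@dA F).

Lemma h2A : (2 : A) = 0.
Proof. by have := cc0 F; rewrite -h2 /cc !polyC_natr. Qed.

Lemma apx_eqr N f (X Y : A) : apx N f X -> X = Y -> apx N f Y.
Proof. by move=> h <-. Qed.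

Lemma Tcube m p z d : (2 <= m)%N -> ordge 1 z -> ordge 2 (p - z) -> ordge m d ->
  ordge (m + 3) ((p + d) ^+ 3 - p ^+ 3 - z ^+ 2 * d).
Proof.
move=> hm hz hpz hd.
have hp : ordge 1 p by rewrite -(subrK z p); apply: ordgeD => //; apply: ordge_le hpz.
have hpz' : ordge 1 (p + z) by apply: ordgeD.
rewrite (_ : _ - _ - _ = (p - z) * (p + z) * d + p * d ^+ 2 + d ^+ 3
    + 2 * (p ^+ 2 * d + p * d ^+ 2)); last by ring.
rewrite h2A mul0r addr0.
apply: ordgeD; first apply: ordgeD.
- apply: ordge_le (ordgeM (ordgeM hpz hpz') hd); lia.
- apply: ordge_le (ordgeM hp (ordgeX (n := 2) hd)); lia.
- apply: ordge_le (ordgeX (n := 3) hd); lia.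
Qed.

Lemma Tsq m p q z d e : (2 <= m)%N -> ordge 1 z -> ordge 2 (p - z) -> ordge 1 q ->
  ordge m d -> ordge m e ->
  ordge (m + 3) ((p + d) ^+ 2 * (q + e) - p ^+ 2 * q - z ^+ 2 * e).
Proof.
move=> hm hz hpz hq hd he.
have hp : ordge 1 p by rewrite -(subrK z p); apply: ordgeD => //; apply: ordge_le hpz.
have hpz' : ordge 1 (p + z) by apply: ordgeD.
rewrite (_ : _ - _ - _ = (p - z) * (p + z) * e + d ^+ 2 * q + d ^+ 2 * e
    + 2 * (p * d * (q + e))); last by ring.
rewrite h2A mul0r addr0.
apply: ordgeD; first apply: ordgeD.
- apply: ordge_le (ordgeM (ordgeM hpz hpz') he); lia.
- apply: ordge_le (ordgeM (ordgeX (n := 2) hd) hq); lia.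
- apply: ordge_le (ordgeM (ordgeX (n := 2) hd) he); lia.
Qed.

Lemma ot1 k c r (X : A) : (c <= 4)%N -> (4 <= k)%N -> ordge k r -> ordge 1 X ->
  ordge (k - 3) (dA c r * X).
Proof. move=> hc hk hr hX; apply: ordge_le (ordgeM (dA_ord hc hr) hX); lia. Qed.

Lemma ot2 k c r (X : A) : (c <= 4)%N -> (4 <= k)%N -> ordge k r -> ordge 2 X ->
  ordge (k - 2) (dA c r * X).
Proof. move=> hc hk hr hX; apply: ordge_le (ordgeM (dA_ord hc hr) hX); lia. Qed.

Lemma ordge_x2 : ordge 2 (xx ^+ 2). Proof. exact: (ordgeX (n := 2) (ordge_xx F)). Qed.
Lemma ordge_y2 : ordge 2 (yy ^+ 2). Proof. exact: (ordgeX (n := 2) (ordge_yy F)). Qed.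
Lemma ordge_xy : ordge 2 (xx * yy). Proof. exact: (ordgeM (ordge_xx F) (ordge_yy F)). Qed.

Lemma ord1_of2 (P : A) : ordge 2 (P - xx) -> ordge 1 P.
Proof. by move=> h; rewrite -(subrK xx P); apply: ordgeD; [apply: ordge_le h | apply: ordge_xx]. Qed.
Lemma ord1_of2y (P : A) : ordge 2 (P - yy) -> ordge 1 P.
Proof. by move=> h; rewrite -(subrK yy P); apply: ordgeD; [apply: ordge_le h | apply: ordge_yy]. Qed.

End NFchar2.

Ltac oform := repeat first [ exact: ordge_xx | exact: ordge_yy | exact: ordge_x2 | exact: ordge_y2
   | exact: ordge_xy | apply: ordgeD | apply: ordgeN | apply: ordgeMl ].
Ltac osum := repeat first [ apply: ordgeD | apply: ordgeN ]; try exact: ordge0;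
   first [ apply: ot1 => //; oform | apply: ot2 => //; oform ].
Ltac apx_step := first [ apply: apx_add | apply: apx_mul | apply: apx_C | apply: apx_scale
  | apply: apx_mono | apply: apx_subst | apply: apx_trp ].

Section NF2s.
Variable F : fieldType.
Hypothesis h2 : (2%:R : F) = 0.
Local Notation A := {poly {poly F}}.
Local Notation cc := (@cc F).
Local Notation xx := (@xx F).
Local Notation yy := (@yy F).
Local Notation ordge := (@ordge F).
Local Notation dA := (@dA F).

Definition nf2_H1 (p q : A) : A := p ^+ 3.
Definition nf2_H2 (p q : A) : A := q ^+ 3.
Definition nf2_L1 (d e : A) : A := xx ^+ 2 * d.
Definition nf2_L2 (d e : A) : A := yy ^+ 2 * e.
Definition nf2_sol (r1 r2 : A) : pm F * (A * A) :=
  (PM (dA 4 r1 * xx + dA 3 r1 * yy) (dA 1 r1 * xx + dA 0 r1 * yy)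
      (dA 4 r2 * xx + dA 3 r2 * yy) (dA 1 r2 * xx + dA 0 r2 * yy),
   (dA 2 r1 * yy ^+ 2, dA 2 r2 * xx ^+ 2)).

Lemma NF2_det (g : ps2 F) : jet_eq 3 g (NF2 F) -> contact_equiv (NF2 F) g.
Proof.
move=> hg; apply: (@CL_main F (NF2 F) nf2_H1 nf2_H2 nf2_L1 nf2_L2 nf2_sol) => //.
- move=> N u v P Q u0 v0 hu hv; split.
  + apply: apx_eqr (apx_subst (apx_mono F 3 0) hu hv u0 v0) _.
    by rewrite /nf2_H1 ev_mul !ev_exp ev_xx ev_yy expr0 mulr1.
  + apply: apx_eqr (apx_subst (apx_mono F 0 3) hu hv u0 v0) _.
    by rewrite /nf2_H2 ev_mul !ev_exp ev_xx ev_yy expr0 mul1r.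
- move=> N; split.
  + by apply: apx_eqr (apx_mono F 3 0) _; rewrite /nf2_H1 expr0 mulr1.
  + by apply: apx_eqr (apx_mono F 0 3) _; rewrite /nf2_H2 expr0 mul1r.
- move=> m p q d e hm hp hq hd he; split; rewrite /nf2_H1 /nf2_H2 /nf2_L1 /nf2_L2.
  + by have := @Tcube F h2 m p xx d hm (ordge_xx F) hp hd.
  + by have := @Tcube F h2 m q yy e hm (ordge_yy F) hq he.
- move=> k d e hd he; split; rewrite addnC /nf2_L1 /nf2_L2.
  + exact: ordgeM (ordge_x2 F) hd.
  + exact: ordgeM (ordge_y2 F) he.
- move=> k r1 r2 hk o1 o2.
  have e1 := decomp (ordge_le hk o1); have e2 := decomp (ordge_le hk o2).
  rewrite /nf2_sol /=; split.
  + by rewrite {1}e1 /pmapp1 /nf2_H1 /nf2_H2 /nf2_L1 /=; ring.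
  + by rewrite {1}e2 /pmapp2 /nf2_H1 /nf2_H2 /nf2_L2 /=; ring.
  + by rewrite /ordm /=; split; osum.
  + by osum.
  + by osum.
Qed.

End NF2s.

Section NF134.
Variable F : fieldType.
Hypothesis h2 : (2%:R : F) = 0.
Local Notation A := {poly {poly F}}.
Local Notation cc := (@cc F).
Local Notation xx := (@xx F).
Local Notation yy := (@yy F).
Local Notation ordge := (@ordge F).
Local Notation dA := (@dA F).

Definition nf1_H1 (p q : A) : A := p ^+ 3.
Definition nf1_H2 (p q : A) : A := q ^+ 3 + p ^+ 2 * q.
Definition nf1_L1 (d e : A) : A := xx ^+ 2 * d.
Definition nf1_L2 (d e : A) : A := yy ^+ 2 * e + xx ^+ 2 * e.
Definition nf1_sol (r1 r2 : A) : pm F * (A * A) :=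
  (PM (dA 4 r1 * xx + dA 3 r1 * yy - dA 1 r1 * yy) (dA 1 r1 * xx + dA 0 r1 * yy)
      (dA 4 r2 * xx + dA 3 r2 * yy - dA 2 r2 * xx - dA 1 r2 * yy + dA 0 r2 * xx) 0,
   (dA 2 r1 * yy ^+ 2 - dA 0 r1 * yy ^+ 2,
    dA 2 r2 * xx ^+ 2 + dA 1 r2 * (xx * yy) + dA 0 r2 * (yy ^+ 2 - xx ^+ 2))).

Lemma NF1_det (g : ps2 F) : jet_eq 3 g (NF1 F) -> contact_equiv (NF1 F) g.
Proof.
move=> hg; apply: (@CL_main F (NF1 F) nf1_H1 nf1_H2 nf1_L1 nf1_L2 nf1_sol) => //.
- move=> N u v P Q u0 v0 hu hv; split.
  + apply: apx_eqr (apx_subst (apx_mono F 3 0) hu hv u0 v0) _.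
    by rewrite /nf1_H1 ev_mul !ev_exp ev_xx ev_yy expr0 mulr1.
  + apply: apx_eqr (apx_subst (apx_add (apx_mono F 0 3) (apx_mono F 2 1)) hu hv u0 v0) _.
    by rewrite /nf1_H2 ev_add !ev_mul !ev_exp ev_xx ev_yy expr0 mul1r expr1.
- move=> N; split.
  + by apply: apx_eqr (apx_mono F 3 0) _; rewrite /nf1_H1 expr0 mulr1.
  + by apply: apx_eqr (apx_add (apx_mono F 0 3) (apx_mono F 2 1)) _; rewrite /nf1_H2 expr0 mul1r expr1.
- move=> m p q d e hm hp hq hd he; split; rewrite /nf1_H1 /nf1_H2 /nf1_L1 /nf1_L2.
  + by have := @Tcube F h2 m p xx d hm (ordge_xx F) hp hd.
  + have t1 := @Tcube F h2 m q yy e hm (ordge_yy F) hq he.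
    have t2 := @Tsq F h2 m p q xx d e hm (ordge_xx F) hp (ord1_of2y hq) hd he.
    rewrite (_ : _ - _ - _ = ((q + e) ^+ 3 - q ^+ 3 - yy ^+ 2 * e)
       + ((p + d) ^+ 2 * (q + e) - p ^+ 2 * q - xx ^+ 2 * e)); last by ring.
    exact: ordgeD.
- move=> k d e hd he; split; rewrite addnC /nf1_L1 /nf1_L2.
  + exact: ordgeM (ordge_x2 F) hd.
  + by apply: ordgeD; apply: ordgeM => //; [exact: ordge_y2 | exact: ordge_x2].
- move=> k r1 r2 hk o1 o2.
  have e1 := decomp (ordge_le hk o1); have e2 := decomp (ordge_le hk o2).
  rewrite /nf1_sol /=; split.
  + by rewrite {1}e1 /pmapp1 /nf1_H1 /nf1_H2 /nf1_L1 /=; ring.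
  + by rewrite {1}e2 /pmapp2 /nf1_H1 /nf1_H2 /nf1_L2 /=; ring.
  + by rewrite /ordm /=; split; osum.
  + by osum.
  + by osum.
Qed.

Definition nf4_H1 (p q : A) : A := p ^+ 2 * q.
Definition nf4_H2 (p q : A) : A := p ^+ 3 + q ^+ 3.
Definition nf4_L1 (d e : A) : A := xx ^+ 2 * e.
Definition nf4_L2 (d e : A) : A := xx ^+ 2 * d + yy ^+ 2 * e.
Definition nf4_sol (r1 r2 : A) : pm F * (A * A) :=
  (PM (dA 3 r1 * xx + dA 2 r1 * yy - dA 0 r1 * xx) (dA 1 r1 * xx + dA 0 r1 * yy)
      0 (dA 1 r2 * xx + dA 0 r2 * yy),
   (dA 4 r2 * xx ^+ 2 + dA 3 r2 * (xx * yy) + dA 2 r2 * yy ^+ 2 - dA 1 r2 * xx ^+ 2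
      - dA 0 r2 * (xx * yy) + dA 1 r1 * yy ^+ 2 - dA 4 r1 * yy ^+ 2,
    dA 4 r1 * xx ^+ 2 - dA 1 r1 * xx ^+ 2)).

Lemma NF4_det (g : ps2 F) : jet_eq 3 g (NF4 F) -> contact_equiv (NF4 F) g.
Proof.
move=> hg; apply: (@CL_main F (NF4 F) nf4_H1 nf4_H2 nf4_L1 nf4_L2 nf4_sol) => //.
- move=> N u v P Q u0 v0 hu hv; split.
  + apply: apx_eqr (apx_subst (apx_mono F 2 1) hu hv u0 v0) _.
    by rewrite /nf4_H1 ev_mul !ev_exp ev_xx ev_yy expr1.
  + apply: apx_eqr (apx_subst (apx_add (apx_mono F 3 0) (apx_mono F 0 3)) hu hv u0 v0) _.
    by rewrite /nf4_H2 ev_add !ev_mul !ev_exp ev_xx ev_yy !expr0 mul1r mulr1.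
- move=> N; split.
  + by apply: apx_eqr (apx_mono F 2 1) _; rewrite /nf4_H1 expr1.
  + by apply: apx_eqr (apx_add (apx_mono F 3 0) (apx_mono F 0 3)) _; rewrite /nf4_H2 !expr0 mul1r mulr1.
- move=> m p q d e hm hp hq hd he; split; rewrite /nf4_H1 /nf4_H2 /nf4_L1 /nf4_L2.
  + by have := @Tsq F h2 m p q xx d e hm (ordge_xx F) hp (ord1_of2y hq) hd he.
  + have t1 := @Tcube F h2 m p xx d hm (ordge_xx F) hp hd.
    have t2 := @Tcube F h2 m q yy e hm (ordge_yy F) hq he.
    rewrite (_ : _ - _ - _ = ((p + d) ^+ 3 - p ^+ 3 - xx ^+ 2 * d)
       + ((q + e) ^+ 3 - q ^+ 3 - yy ^+ 2 * e)); last by ring.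
    exact: ordgeD.
- move=> k d e hd he; split; rewrite addnC /nf4_L1 /nf4_L2.
  + exact: ordgeM (ordge_x2 F) he.
  + by apply: ordgeD; apply: ordgeM => //; [exact: ordge_x2 | exact: ordge_y2].
- move=> k r1 r2 hk o1 o2.
  have e1 := decomp (ordge_le hk o1); have e2 := decomp (ordge_le hk o2).
  rewrite /nf4_sol /=; split.
  + by rewrite {1}e1 /pmapp1 /nf4_H1 /nf4_H2 /nf4_L1 /=; ring.
  + by rewrite {1}e2 /pmapp2 /nf4_H1 /nf4_H2 /nf4_L2 /=; ring.
  + by rewrite /ordm /=; split; osum.
  + by osum.
  + by osum.
Qed.

End NF134.

Section NF3s.
Variable F : fieldType.
Hypothesis h2 : (2%:R : F) = 0.
Variable lam : F.
Hypothesis hl : lam != 1.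
Local Notation A := {poly {poly F}}.
Local Notation cc := (@cc F).
Local Notation xx := (@xx F).
Local Notation yy := (@yy F).
Local Notation ordge := (@ordge F).
Local Notation dA := (@dA F).

Lemma lam1 : 1 + lam != 0.
Proof.
apply: contra hl => h.
have h11 : (1 : F) + 1 = 0 by rewrite -h2 mulr2n.
rewrite addr_eq0 in h.
move/eqP: h11; rewrite addr_eq0 => /eqP h11.
by rewrite -[lam]opprK -(eqP h) -h11.
Qed.

Definition mu := (1 + lam)^-1.

Lemma hmu : cc lam * cc mu = 1 - cc mu.
Proof.
have e : (1 + lam) * mu = 1 by rewrite /mu mulfV // lam1.
have eF : lam * mu = (1 + lam) * mu - mu by ring.
by rewrite e in eF; rewrite -ccM eF ccB cc1.
Qed.

Definition nf3_H1 (p q : A) : A := p ^+ 3 + p ^+ 2 * q.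
Definition nf3_H2 (p q : A) : A := q ^+ 3 + cc lam * (p ^+ 2 * q).
Definition nf3_L1 (d e : A) : A := xx ^+ 2 * d + xx ^+ 2 * e.
Definition nf3_L2 (d e : A) : A := yy ^+ 2 * e + cc lam * (xx ^+ 2 * e).
Definition nf3_G (r2 : A) : A :=
  dA 4 r2 * (cc mu * xx ^+ 2) - dA 3 r2 * (cc mu * xx ^+ 2) + dA 2 r2 * (cc mu * xx ^+ 2)
  + dA 1 r2 * (cc lam * cc mu * xx ^+ 2) - dA 0 r2 * (cc lam * cc mu * xx ^+ 2).
Definition nf3_sol (r1 r2 : A) : pm F * (A * A) :=
  (PM 0 (dA 1 r1 * xx + dA 0 r1 * yy)
      (dA 4 r2 * (cc mu * xx) + dA 3 r2 * (cc lam * cc mu * xx) - dA 2 r2 * (cc lam * cc mu * xx)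
       - dA 1 r2 * (cc lam * cc lam * cc mu * xx) + dA 0 r2 * (cc lam * cc lam * cc mu * xx)
       - dA 4 r2 * (cc mu * yy) + dA 3 r2 * (cc mu * yy) + dA 2 r2 * (cc lam * cc mu * yy)
       - dA 1 r2 * (cc lam * cc mu * yy) - dA 0 r2 * (cc lam * cc lam * cc mu * yy))
      (dA 1 r2 * xx + dA 0 r2 * yy),
   (dA 4 r1 * xx ^+ 2 + dA 3 r1 * (xx * yy) + dA 2 r1 * yy ^+ 2 - dA 1 r1 * (cc lam * (xx * yy))
      - dA 0 r1 * (cc lam * yy ^+ 2) - nf3_G r2,
    nf3_G r2)).

Lemma NF3_det (g : ps2 F) : jet_eq 3 g (NF3 lam) -> contact_equiv (NF3 lam) g.
Proof.
move=> hg; apply: (@CL_main F (NF3 lam) nf3_H1 nf3_H2 nf3_L1 nf3_L2 nf3_sol) => //.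
- move=> N u v P Q u0 v0 hu hv; split.
  + apply: apx_eqr (apx_subst (apx_add (apx_mono F 3 0) (apx_mono F 2 1)) hu hv u0 v0) _.
    by rewrite /nf3_H1 ev_add !ev_mul !ev_exp ev_xx ev_yy expr0 mulr1 expr1.
  + apply: apx_eqr (apx_subst (apx_add (apx_mono F 0 3) (apx_scale lam (apx_mono F 2 1))) hu hv u0 v0) _.
    by rewrite /nf3_H2 ev_add !ev_mul ev_cc !ev_exp ev_xx ev_yy expr0 mul1r expr1.
- move=> N; split.
  + by apply: apx_eqr (apx_add (apx_mono F 3 0) (apx_mono F 2 1)) _; rewrite /nf3_H1 expr0 mulr1 expr1.
  + by apply: apx_eqr (apx_add (apx_mono F 0 3) (apx_scale lam (apx_mono F 2 1))) _;
      rewrite /nf3_H2 expr0 mul1r expr1.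
- move=> m p q d e hm hp hq hd he; split; rewrite /nf3_H1 /nf3_H2 /nf3_L1 /nf3_L2.
  + have t1 := @Tcube F h2 m p xx d hm (ordge_xx F) hp hd.
    have t2 := @Tsq F h2 m p q xx d e hm (ordge_xx F) hp (ord1_of2y hq) hd he.
    rewrite (_ : _ - _ - _ = ((p + d) ^+ 3 - p ^+ 3 - xx ^+ 2 * d)
       + ((p + d) ^+ 2 * (q + e) - p ^+ 2 * q - xx ^+ 2 * e)); last by ring.
    exact: ordgeD.
  + have t1 := @Tcube F h2 m q yy e hm (ordge_yy F) hq he.
    have t2 := @Tsq F h2 m p q xx d e hm (ordge_xx F) hp (ord1_of2y hq) hd he.
    rewrite (_ : _ - _ - _ = ((q + e) ^+ 3 - q ^+ 3 - yy ^+ 2 * e)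
       + cc lam * ((p + d) ^+ 2 * (q + e) - p ^+ 2 * q - xx ^+ 2 * e)); last by ring.
    by apply: ordgeD => //; apply: ordgeMl.
- move=> k d e hd he; split; rewrite addnC /nf3_L1 /nf3_L2.
  + by apply: ordgeD; apply: ordgeM => //; exact: ordge_x2.
  + apply: ordgeD; first by apply: ordgeM => //; exact: ordge_y2.
    by apply: ordgeMl; apply: ordgeM => //; exact: ordge_x2.
- move=> k r1 r2 hk o1 o2.
  have e1 := decomp (ordge_le hk o1); have e2 := decomp (ordge_le hk o2).
  have hm := hmu.
  rewrite /nf3_sol /=; split.
  + rewrite {1}e1 /pmapp1 /nf3_H1 /nf3_H2 /nf3_L1 /nf3_G /=.
    move: hm; generalize (cc lam) (cc mu) => Lm Mu hm; ring: hm.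
  + rewrite {1}e2 /pmapp2 /nf3_H1 /nf3_H2 /nf3_L2 /nf3_G /=.
    move: hm; generalize (cc lam) (cc mu) => Lm Mu hm; ring: hm.
  + by rewrite /ordm /=; split; osum.
  + by rewrite /nf3_G; osum.
  + by rewrite /nf3_G; osum.
Qed.

End NF3s.

Section Final.
Variable F : fieldType.
Local Notation A := {poly {poly F}}.
Local Notation ps := (ps F).
Local Notation ps2 := (ps2 F).
Local Notation mat2 := (mat2 F).

Lemma jet_lemma (g c : ps2) (U : mat2) (u v : ps) : u 0%N 0%N = 0 -> v 0%N 0%N = 0 ->
  jet_eq 3 g c -> jet_eq 3 (matapp U (subst2 g u v)) (matapp U (subst2 c u v)).
Proof.
move=> u0 v0 hg.
have key : forall h : ps2, jet_eq 3 h c ->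
  apx 3 (matapp U (subst2 h u v)).1
    (trp 3 (m11 U) * ev (trp 3 c.1) (trp 3 u) (trp 3 v) + trp 3 (m12 U) * ev (trp 3 c.2) (trp 3 u) (trp 3 v)) /\
  apx 3 (matapp U (subst2 h u v)).2
    (trp 3 (m21 U) * ev (trp 3 c.1) (trp 3 u) (trp 3 v) + trp 3 (m22 U) * ev (trp 3 c.2) (trp 3 u) (trp 3 v)).
  move=> h hh.
  have a1 : apx 3 h.1 (trp 3 c.1) by move=> i j hij; have [e1 _] := @hh i j hij; rewrite e1 -apx_trp.
  have a2 : apx 3 h.2 (trp 3 c.2) by move=> i j hij; have [_ e2] := @hh i j hij; rewrite e2 -apx_trp.
  rewrite /matapp /subst2 /=; split; apply: apx_add; apply: apx_mul; try exact: apx_trp;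
    apply: apx_subst => //; exact: apx_trp.
have [k1 k2] := key g hg.
have hc : jet_eq 3 c c by [].
have [k3 k4] := key c hc.
by move=> i j hij; rewrite (k1 i j hij) (k2 i j hij) (k3 i j hij) (k4 i j hij).
Qed.

Lemma det_from (nf : ps2) (hCL : forall g, jet_eq 3 g nf -> contact_equiv nf g) (c : ps2) :
  contact_equiv c nf -> forall g, jet_eq 3 g c -> contact_equiv c g.
Proof.
move=> hcn; have [U [u [v [hU [hc hnf]]]]] := hcn.
move=> g hg.
have [u0 [v0 _]] := hc.
have hj : jet_eq 3 (matapp U (subst2 g u v)) nf by rewrite hnf; apply: jet_lemma.
have h1 := hCL _ hj.
have h2 : contact_equiv g (matapp U (subst2 g u v)) by exists U, u, v.
exact: ce_trans hcn (ce_trans h1 (ce_sym h2)).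
Qed.

End Final.

Unset Implicit Arguments.

Theorem proposition6p3 (F : closedFieldType) (char2 : (2 \in [pchar F])%N)
  (f : ps2 F) :
  (contact_equiv (jet 3 f) (NF1 F) \/ contact_equiv (jet 3 f) (NF2 F) \/
   (exists lam : F, lam != 1 /\ contact_equiv (jet 3 f) (NF3 lam)) \/
   contact_equiv (jet 3 f) (NF4 F)) ->
  determined 3 (jet 3 f) /\
  (contact_equiv (jet 3 f) (NF1 F) -> contact_equiv f (NF1 F)) /\
  (contact_equiv (jet 3 f) (NF2 F) -> contact_equiv f (NF2 F)) /\
  (forall lam : F, lam != 1 -> contact_equiv (jet 3 f) (NF3 lam) ->
     contact_equiv f (NF3 lam)) /\
  (contact_equiv (jet 3 f) (NF4 F) -> contact_equiv f (NF4 F)).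
Proof.
move=> H.
have h2 : (2%:R : F) = 0 := pcharf0 char2.
have det : determined 3 (jet 3 f).
  case: H => [h|[h|[[lam [hl h]]|h]]] g hg.
  - have H1 := NF1_det h2. have H2 := det_from H1 h. exact: H2 hg.
  - have H1 := NF2_det h2. have H2 := det_from H1 h. exact: H2 hg.
  - have H1 := NF3_det h2 hl. have H2 := det_from H1 h. exact: H2 hg.
  - have H1 := NF4_det h2. have H2 := det_from H1 h. exact: H2 hg.
have hjf : jet_eq 3 f (jet 3 f) by move=> i j hij; rewrite /jet /= hij.
have cf := det f hjf.
split => //.
split; first by move=> h; exact: ce_trans (ce_sym cf) h.
split; first by move=> h; exact: ce_trans (ce_sym cf) h.
split; first by move=> lam hl h; exact: ce_trans (ce_sym cf) h.
by move=> h; exact: ce_trans (ce_sym cf) h.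
Qed.
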